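(* Let $\Pi$ be a proof structure with hypotheses $A_1,\ldots,A_n$ (labelled by strings $\alpha_1,\ldots,\alpha_n$) and conclusion $C$, whose abstract proof structure contracts, by a finite sequence $\rho$ of the contractions in the context, to a single comb with conclusion $C$ whose premiss sequence, read as a string, is $\gamma$. Then there is a natural deduction proof of $\alpha_1:A_1,\ldots,\alpha_n:A_n\vdash\gamma:C$ in the Displacement calculus.
   Context: Strings. String terms are built from a countably infinite set of variables (each of sort $0$) and a separator constant $\mathbf{1}$ by an associative concatenation $+$ (with empty string $\epsilon$). The sort of a string term is its number of occurrences of $\mathbf{1}$. For $k\in\{>,<\}\cup\{1,2,3,\ldots\}$ and strings $\alpha$ (of sort $\geq 1$, resp. $\geq k$ if $k$ is an integer) and $\beta$: write $\alpha=\alpha'+\mathbf{1}+\alpha''$ where the displayed $\mathbf{1}$ is the first occurrence of $\mathbf{1}$ if $k={>}$, the last one if $k={<}$, and the $k$-th one if $k$ is an integer; then $\alpha\times_k\beta=\alpha'+\beta+\alpha''$. Formulas. Atomic formulas have fixed sorts. Complex formulas are $A\bullet B$, $A\backslash C$, $C/B$, $A\odot_k B$, $A\downarrow_k C$, $C\uparrow_k B$ with sorts $s(A\bullet B)=s(A)+s(B)$, $s(A\backslash C)=s(C)-s(A)$, $s(C/B)=s(C)-s(B)$, $s(A\odot_k B)=s(A)+s(B)-1$, $s(A\downarrow_k C)=s(C)+1-s(A)$, $s(C\uparrow_k B)=s(C)+1-s(B)$; a formula is well formed only when all these sorts are $\geq 0$ and the wrap operations required below are defined. Natural deduction. Judgements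 are $\alpha:A$ with $\alpha$ a string of sort $s(A)$. Hypotheses (and withdrawn hypotheses) of sort $m$ are labelled $p_0+\mathbf{1}+\cdots+\mathbf{1}+p_m$ with fresh distinct variables $p_i$. Rules: $\backslash E$: from $\alpha:A$ and $\gamma:A\backslash C$ infer $\alpha+\gamma:C$; $\backslash I$: from a derivation of $\alpha+\gamma:C$ with hypothesis $\alpha:A$, withdraw it and infer $\gamma:A\backslash C$; $/E$: from $\gamma:C/B$ and $\beta:B$ infer $\gamma+\beta:C$; $/I$: from a derivation of $\gamma+\beta:C$ withdraw $\beta:B$, infer $\gamma:C/B$; $\bullet I$: from $\alpha:A,\beta:B$ infer $\alpha+\beta:A\bullet B$; $\bullet E$: from $\delta:A\bullet B$ and a derivation of $\gamma[\alpha+\beta]:C$ from hypotheses $\alpha:A,\beta:B$, withdraw these and infer $\gamma[\delta]:C$; $\downarrow_k E$: from $\alpha:A$ and $\gamma:A\downarrow_k C$ infer $\alpha\times_k\gamma:C$; $\downarrow_k I$: from a derivation of $\alpha\times_k\gamma:C$ withdraw $\alpha:A$, infer $\gamma:A\downarrow_k C$; $\uparrow_k E$: from $\gamma:C\uparrow_k B$ and $\beta:B$ infer $\gamma\times_k\beta:C$; $\uparrow_k I$: from a derivation of $\gamma\times_k\beta:C$ withdraw $\beta:B$, infer $\gamma:C\uparrow_k B$; $\odot_k I$: from $\alpha:A,\beta:B$ infer $\alpha\times_k\beta:A\odot_k B$; $\odot_k E$: from $\delta:A\odot_k B$ and a derivation of $\gamma[\alpha\times_k\beta]:C$ from $\alpha:A,\beta:B$,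 withdraw these and infer $\gamma[\delta]:C$. Links. A link joins an ordered list of premiss formulas and an ordered list of conclusion formulas. Tensor links: $[L/]$ premisses $C/B,B$, conclusion $C$, label $+$; $[L\backslash]$ premisses $A,A\backslash C$, conclusion $C$, label $+$; $[R\bullet]$ premisses $A,B$, conclusion $A\bullet B$, label $+$; $[L\uparrow_k]$ premisses $C\uparrow_k B,B$, conclusion $C$, label $\times_k$; $[L\downarrow_k]$ premisses $A, A\downarrow_k C$, conclusion $C$, label $\times_k$; $[R\odot_k]$ premisses $A,B$, conclusion $A\odot_k B$, label $\times_k$. Par links (one formula is marked as main): $[L\bullet]$ premiss $A\bullet B$ (main), conclusions $A,B$; $[L\odot_k]$ premiss $A\odot_k B$ (main), conclusions $A,B$; $[R/]$ premiss $C$, conclusions $C/B$ (main), $B$; $[R\backslash]$ premiss $C$, conclusions $A$, $A\backslash C$ (main); $[R\uparrow_k]$ premiss $C$, conclusions $C\uparrow_k B$ (main), $B$; $[R\downarrow_k]$ premiss $C$, conclusions $A$, $A\downarrow_k C$ (main). A proof structure is a set of formula occurrences and links instantiating these schemes such that each formula is premiss of at most one link and conclusion of at most one link. Its hypotheses are formulas that are conclusion of no link; its conclusions are formulas that are premiss of no link. Its auxiliary inputs are the non-main conclusions of par links (both conclusions for $[L\bullet]$, $[L\odot_k]$). Combs and abstract proof structures. A comb is a link with an ordered (possibly empty) list of premisses and one conclusion distinct from them; premisses are vertices or occurrences of the constant $\mathbf{1}$ (sort 1); the sort of a comb is the sum of the sorts of its premisses. The abstract proof structure of a proof structure is obtained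 by: replacing each $+$-labelled tensor link with premisses $v_1,v_2$ and conclusion $v_3$ by a comb with premisses $v_1,v_2$ and conclusion $v_3$; replacing each hypothesis $A_i$ of sort $m$ by an unlabelled vertex that is the conclusion of a comb with premisses $p_0,\mathbf{1},p_1,\ldots,\mathbf{1},p_m$ where $\alpha_i=p_0+\mathbf{1}+\cdots+\mathbf{1}+p_m$ with fresh distinct sort-0 variables $p_j$; replacing each auxiliary input $A$ of sort $m$ by an unlabelled vertex that is the conclusion of a comb with premisses $v_0,\mathbf{1},v_1,\ldots,\mathbf{1},v_m$, where $v_0,\ldots,v_m$ are fresh sort-0 vertices and the par link is connected to all of $v_0,\ldots,v_m$ instead of $A$ (the expansion of that auxiliary input); keeping the label of the conclusion of the structure and making all other vertices unlabelled (each keeping the sort of its formula). Contractions (sequences $\alpha_1,\alpha_2,\beta,\gamma_1,\gamma_2$ of comb premisses may be empty). $[+]$: a comb with premisses $\alpha_1,w,\alpha_2$ and conclusion $v$, where $w$ is the conclusion of a comb with premisses $\beta$, becomes one comb with premisses $\alpha_1,\beta,\alpha_2$ and conclusion $v$. $[\times_k]$: a $\times_k$ tensor link with conclusion $v$ whose first premiss is the conclusion of a comb with premisses $\alpha_1,\mathbf{1},\alpha_2$ and whose second premiss is the conclusion of a comb with premisses $\beta$ becomes a comb with premisses $\alpha_1,\beta,\alpha_2$ and conclusion $v$, where the displayed $\mathbf{1}$ is the one selected by $k$ ($\alpha_1$ of sort $0$ if $k={>}$, $\alpha_2$ of sort 0 if $k={<}$, $\alpha_1$ of sort $k-1$ if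 $k$ is an integer). In the logical contractions, a par link with main vertex $v$ (or premiss $v_1$ for $\bullet,\odot_k$) is removed together with its connections; $e_A, e_B$ denote the expansions of its auxiliary inputs. $[\backslash]$: par $[R\backslash]$ whose premiss is the conclusion of a comb with premisses $e_A,\beta$: result comb $\beta$ with conclusion $v$. $[/]$: symmetric with comb premisses $\beta,e_B$. $[\uparrow_k]$: par $[R\uparrow_k]$ whose premiss is the conclusion of a comb with premisses $\alpha_1,e_B,\alpha_2$: result comb $\alpha_1,\mathbf{1},\alpha_2$ with conclusion $v$, with the same sort restriction on $\alpha_1,\alpha_2$ as for $[\times_k]$. $[\downarrow_k]$: par $[R\downarrow_k]$ whose premiss is the conclusion of a comb with premisses $e',\beta,e''$ where $e_A=e',\mathbf{1},e''$ with the displayed $\mathbf{1}$ selected by $k$: result comb $\beta$ with conclusion $v$. $[\bullet]$: par $[L\bullet]$ with premiss $v_1$ and a comb with premisses $\gamma_1,e_A,e_B,\gamma_2$ and conclusion $v_2$: result comb $\gamma_1,v_1,\gamma_2$ with conclusion $v_2$. $[\odot_k]$: par $[L\odot_k]$ with premiss $v_1$, $e_A=e',\mathbf{1},e''$ with the $\mathbf{1}$ selected by $k$, and a comb with premisses $\gamma_1,e',e_B,e'',\gamma_2$ and conclusion $v_2$: result comb $\gamma_1,v_1,\gamma_2$ with conclusion $v_2$. *)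

(* Defs.v *)
From Stdlib Require Import List Arith Permutation Relations.
Import ListNotations.

Inductive mode : Type := MFirst | MLast | MNth (n : nat) .

Definition mode_ok (k : mode) : Prop :=
  match k with MNth n => 1 <= n | _ => True end.

(* minimal sort required of the wrapping string for mode k *)
Definition bound (k : mode) : nat :=
  match k with MNth n => n | _ => 1 end.

(* Strings: symbols are variables (sort 0) or the separator 1.       *)
(* In abstract proof structures the same type is used for comb       *)
(* premisses: SV v is the vertex v, S1 the constant 1; reading a     *)
(* premiss sequence as a string reads vertex v as the variable v.    *)
Inductive sym : Type := SV (v : nat) | S1.
Definition str := list sym.

Definition ssort (f : nat -> nat) (s : list sym) : nat :=
  fold_right (fun x acc => match x with S1 => 1 | SV v => f v end + acc) 0 s.

Definition str_sort (s : str) : nat := ssort (fun _ => 0) s.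

(* s = a1 + 1 + a2 where the displayed 1 is the one selected by k *)
Definition selected (f : nat -> nat) (k : mode) (a1 a2 : list sym) : Prop :=
  match k with
  | MFirst => ssort f a1 = 0
  | MLast => ssort f a2 = 0
  | MNth n => S (ssort f a1) = n
  end.

Definition wraps (k : mode) (a b r : str) : Prop :=
  exists a1 a2, a = a1 ++ S1 :: a2 /\ selected (fun _ => 0) k a1 a2 /\ r = a1 ++ b ++ a2.

Definition vars (s : str) : list nat :=
  flat_map (fun x => match x with SV v => [v] | S1 => [] end) s.

Fixpoint spine (ps : list nat) : list sym :=
  match ps with
  | [] => []
  | [p] => [SV p]
  | p :: ps' => SV p :: S1 :: spine ps'
  end.

Definition hyplabel (a : str) (m : nat) : Prop :=
  exists ps, NoDup ps /\ length ps = S m /\ a = spine ps.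

Inductive formula : Type :=
| Atom (name : nat) (s : nat)
| Prod (A B : formula)
| Under (A C : formula)
| Over (C B : formula)
| Wrap (k : mode) (A B : formula)
| Inf (k : mode) (A C : formula)
| Ext (k : mode) (C B : formula).

Fixpoint sort (F : formula) : nat :=
  match F with
  | Atom _ s => s
  | Prod A B => sort A + sort B
  | Under A C => sort C - sort A
  | Over C B => sort C - sort B
  | Wrap _ A B => sort A + sort B - 1
  | Inf _ A C => sort C + 1 - sort A
  | Ext _ C B => sort C + 1 - sort B
  end.

(* well-formedness: all (integer) sorts >= 0 and wraps defined *)
Fixpoint wf (F : formula) : Prop :=
  match F with
  | Atom _ _ => True
  | Prod A B => wf A /\ wf B
  | Under A C => wf A /\ wf C /\ sort A <= sort C
  | Over C B => wf C /\ wf B /\ sort B <= sort C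
  | Wrap k A B => wf A /\ wf B /\ mode_ok k /\ bound k <= sort A
  | Inf k A C => wf A /\ wf C /\ sort A <= sort C + 1 /\ mode_ok k /\ bound k <= sort A
  | Ext k C B => wf C /\ wf B /\ sort B <= sort C + 1 /\ mode_ok k
                 /\ bound k <= sort C + 1 - sort B
  end.

(* Labelled natural deduction (linear: each hypothesis used once).   *)
(* A judgement  nd G g C  means: there is an ND proof of g : C whose *)
(* undischarged hypotheses are exactly the labelled formulas in G.   *)
Definition ctx := list (str * formula).
Definition ctx_vars (G : ctx) : list nat := flat_map (fun p => vars (fst p)) G.
Definition disj (l1 l2 : list nat) : Prop := forall x, In x l1 -> ~ In x l2.

Inductive nd : ctx -> str -> formula -> Prop :=
| nd_hyp : forall a A, wf A -> hyplabel a (sort A) -> nd [(a, A)] a A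
| nd_perm : forall G G' s A, Permutation G G' -> nd G s A -> nd G' s A
| nd_underE : forall G D a g A C,
    nd G a A -> nd D g (Under A C) -> disj (ctx_vars G) (ctx_vars D) ->
    nd (G ++ D) (a ++ g) C
| nd_underI : forall G a g A C,
    nd ((a, A) :: G) (a ++ g) C -> hyplabel a (sort A) ->
    disj (vars a) (ctx_vars G) -> disj (vars a) (vars g) ->
    nd G g (Under A C)
| nd_overE : forall G D g b C B,
    nd G g (Over C B) -> nd D b B -> disj (ctx_vars G) (ctx_vars D) ->
    nd (G ++ D) (g ++ b) C
| nd_overI : forall G g b C B,
    nd ((b, B) :: G) (g ++ b) C -> hyplabel b (sort B) ->
    disj (vars b) (ctx_vars G) -> disj (vars b) (vars g) ->
    nd G g (Over C B)
| nd_prodI : forall G D a b A B,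
    nd G a A -> nd D b B -> disj (ctx_vars G) (ctx_vars D) ->
    nd (G ++ D) (a ++ b) (Prod A B)
| nd_prodE : forall D G d a b g1 g2 A B C,
    nd D d (Prod A B) ->
    nd ((a, A) :: (b, B) :: G) (g1 ++ a ++ b ++ g2) C ->
    hyplabel a (sort A) -> hyplabel b (sort B) -> disj (vars a) (vars b) ->
    disj (vars a ++ vars b) (ctx_vars G ++ ctx_vars D ++ vars g1 ++ vars g2) ->
    disj (ctx_vars D) (ctx_vars G) ->
    nd (D ++ G) (g1 ++ d ++ g2) C
| nd_infE : forall k G D a g r A C,
    nd G a A -> nd D g (Inf k A C) -> wraps k a g r -> disj (ctx_vars G) (ctx_vars D) ->
    nd (G ++ D) r C
| nd_infI : forall k G a g r A C,
    nd ((a, A) :: G) r C -> wraps k a g r -> hyplabel a (sort A) ->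
    disj (vars a) (ctx_vars G) -> disj (vars a) (vars g) ->
    nd G g (Inf k A C)
| nd_extE : forall k G D g b r C B,
    nd G g (Ext k C B) -> nd D b B -> wraps k g b r -> disj (ctx_vars G) (ctx_vars D) ->
    nd (G ++ D) r C
| nd_extI : forall k G g b r C B,
    nd ((b, B) :: G) r C -> wraps k g b r -> hyplabel b (sort B) ->
    disj (vars b) (ctx_vars G) -> disj (vars b) (vars g) ->
    nd G g (Ext k C B)
| nd_wrapI : forall k G D a b r A B,
    nd G a A -> nd D b B -> wraps k a b r -> disj (ctx_vars G) (ctx_vars D) ->
    nd (G ++ D) r (Wrap k A B)
| nd_wrapE : forall k D G d a b w g1 g2 A B C,
    nd D d (Wrap k A B) ->
    nd ((a, A) :: (b, B) :: G) (g1 ++ w ++ g2) C -> wraps k a b w ->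
    hyplabel a (sort A) -> hyplabel b (sort B) -> disj (vars a) (vars b) ->
    disj (vars a ++ vars b) (ctx_vars G ++ ctx_vars D ++ vars g1 ++ vars g2) ->
    disj (ctx_vars D) (ctx_vars G) ->
    nd (D ++ G) (g1 ++ d ++ g2) C.

(* Proof structures: formula occurrences are vertices (nat), labelled *)
(* by plab; links instantiate the schemes of the paper.              *)
Inductive link : Type :=
(* tensor links: premisses, then conclusion *)
| TOver (cb b c : nat)
| TUnder (a ac c : nat)
| TProd (a b ab : nat)
| TExt (k : mode) (cb b c : nat)
| TInf (k : mode) (a ac c : nat)
| TWrap (k : mode) (a b ab : nat)
(* par links: premiss, then conclusions *)
| PLProd (ab a b : nat)
| PLWrap (k : mode) (ab a b : nat)
| PROver (c cb b : nat)
| PRUnder (c a ac : nat)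
| PRExt (k : mode) (c cb b : nat)
| PRInf (k : mode) (c a ac : nat).

Definition prems (l : link) : list nat :=
  match l with
  | TOver x y _ | TUnder x y _ | TProd x y _
  | TExt _ x y _ | TInf _ x y _ | TWrap _ x y _ => [x; y]
  | PLProd x _ _ | PLWrap _ x _ _ | PROver x _ _ | PRUnder x _ _
  | PRExt _ x _ _ | PRInf _ x _ _ => [x]
  end.

Definition concls (l : link) : list nat :=
  match l with
  | TOver _ _ z | TUnder _ _ z | TProd _ _ z
  | TExt _ _ _ z | TInf _ _ _ z | TWrap _ _ _ z => [z]
  | PLProd _ y z | PLWrap _ _ y z | PROver _ y z | PRUnder _ y z
  | PRExt _ _ y z | PRInf _ _ y z => [y; z]
  end.

Definition auxs (l : link) : list nat :=
  match l with
  | PLProd _ a b | PLWrap _ _ a b => [a; b]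
  | PROver _ _ b | PRExt _ _ _ b => [b]
  | PRUnder _ a _ | PRInf _ _ a _ => [a]
  | _ => []
  end.

Definition link_ok (lab : nat -> formula) (l : link) : Prop :=
  match l with
  | TOver cb b c => lab cb = Over (lab c) (lab b)
  | TUnder a ac c => lab ac = Under (lab a) (lab c)
  | TProd a b ab => lab ab = Prod (lab a) (lab b)
  | TExt k cb b c => lab cb = Ext k (lab c) (lab b)
  | TInf k a ac c => lab ac = Inf k (lab a) (lab c)
  | TWrap k a b ab => lab ab = Wrap k (lab a) (lab b)
  | PLProd ab a b => lab ab = Prod (lab a) (lab b)
  | PLWrap k ab a b => lab ab = Wrap k (lab a) (lab b)
  | PROver c cb b => lab cb = Over (lab c) (lab b)
  | PRUnder c a ac => lab ac = Under (lab a) (lab c)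
  | PRExt k c cb b => lab cb = Ext k (lab c) (lab b)
  | PRInf k c a ac => lab ac = Inf k (lab a) (lab c)
  end.

Record pstruct : Type := {
  pverts : list nat;
  plab : nat -> formula;
  plinks : list link }.

Definition count_in (v : nat) (f : link -> list nat) (ls : list link) : nat :=
  length (filter (fun l => existsb (Nat.eqb v) (f l)) ls).

Definition proof_structure (P : pstruct) : Prop :=
  NoDup (pverts P) /\
  (forall v, In v (pverts P) -> wf (plab P v)) /\
  (forall l, In l (plinks P) ->
     link_ok (plab P) l /\ NoDup (prems l ++ concls l) /\
     incl (prems l ++ concls l) (pverts P)) /\
  (forall v, count_in v prems (plinks P) <= 1) /\
  (forall v, count_in v concls (plinks P) <= 1).

Definition is_hyp (P : pstruct) (v : nat) : Prop :=
  In v (pverts P) /\ forall l, In l (plinks P) -> ~ In v (concls l).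
Definition is_concl (P : pstruct) (v : nat) : Prop :=
  In v (pverts P) /\ forall l, In l (plinks P) -> ~ In v (prems l).

Definition all_auxs (P : pstruct) : list nat := flat_map auxs (plinks P).

Inductive par : Type :=
| ParLProd (v1 : nat) (eA eB : list nat)
| ParLWrap (k : mode) (v1 : nat) (eA eB : list nat)
| ParROver (c : nat) (v : nat) (eB : list nat)
| ParRUnder (c : nat) (eA : list nat) (v : nat)
| ParRExt (k : mode) (c : nat) (v : nat) (eB : list nat)
| ParRInf (k : mode) (c : nat) (eA : list nat) (v : nat).

Record aps : Type := {
  combs : list (list sym * nat);          (* (premisses, conclusion) *)
  tens : list (mode * nat * nat * nat);   (* x_k tensor links: k, prem1, prem2, concl *)
  pars : list par }.

(* the abstract proof structure of P, where fr h gives the fresh sort-0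
   vertices p_0..p_m of hypothesis h (so that alpha_h = spine (fr h)), and
   fr a gives the expansion vertices v_0..v_m of auxiliary input a *)
Definition abs_comb (l : link) : list (list sym * nat) :=
  match l with
  | TOver x y z | TUnder x y z | TProd x y z => [([SV x; SV y], z)]
  | _ => []
  end.

Definition abs_tens (l : link) : list (mode * nat * nat * nat) :=
  match l with
  | TExt k x y z | TInf k x y z | TWrap k x y z => [(k, x, y, z)]
  | _ => []
  end.

Definition abs_par (fr : nat -> list nat) (l : link) : list par :=
  match l with
  | PLProd ab a b => [ParLProd ab (fr a) (fr b)]
  | PLWrap k ab a b => [ParLWrap k ab (fr a) (fr b)]
  | PROver c cb b => [ParROver c cb (fr b)]
  | PRUnder c a ac => [ParRUnder c (fr a) ac]
  | PRExt k c cb b => [ParRExt k c cb (fr b)]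
  | PRInf k c a ac => [ParRInf k c (fr a) ac]
  | _ => []
  end.

Definition abstract (P : pstruct) (hs : list nat) (fr : nat -> list nat) : aps :=
  {| combs := flat_map abs_comb (plinks P)
              ++ map (fun h => (spine (fr h), h)) hs
              ++ map (fun a => (spine (fr a), a)) (all_auxs P);
     tens := flat_map abs_tens (plinks P);
     pars := flat_map (abs_par fr) (plinks P) |}.

Definition abs_sort (P : pstruct) (v : nat) : nat :=
  if in_dec Nat.eq_dec v (pverts P) then sort (plab P v) else 0.

Definition fresh_assignment (P : pstruct) (hs : list nat) (fr : nat -> list nat) : Prop :=
  (forall x, In x (hs ++ all_auxs P) -> length (fr x) = S (sort (plab P x))) /\
  NoDup (flat_map fr (hs ++ all_auxs P)) /\
  disj (flat_map fr (hs ++ all_auxs P)) (pverts P).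

Inductive contr (f : nat -> nat) : aps -> aps -> Prop :=
| c_plus : forall K T Q a1 a2 w v b K',
    Permutation K ((a1 ++ SV w :: a2, v) :: (b, w) :: K') ->
    contr f {| combs := K; tens := T; pars := Q |}
            {| combs := (a1 ++ b ++ a2, v) :: K'; tens := T; pars := Q |}
| c_wrap : forall K T Q k v1 v2 v a1 a2 b K' T',
    Permutation T ((k, v1, v2, v) :: T') ->
    Permutation K ((a1 ++ S1 :: a2, v1) :: (b, v2) :: K') ->
    selected f k a1 a2 ->
    contr f {| combs := K; tens := T; pars := Q |}
            {| combs := (a1 ++ b ++ a2, v) :: K'; tens := T'; pars := Q |}
| c_under : forall K T Q c eA v b K' Q',
    Permutation Q (ParRUnder c eA v :: Q') ->
    Permutation K ((spine eA ++ b, c) :: K') ->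
    contr f {| combs := K; tens := T; pars := Q |}
            {| combs := (b, v) :: K'; tens := T; pars := Q' |}
| c_over : forall K T Q c eB v b K' Q',
    Permutation Q (ParROver c v eB :: Q') ->
    Permutation K ((b ++ spine eB, c) :: K') ->
    contr f {| combs := K; tens := T; pars := Q |}
            {| combs := (b, v) :: K'; tens := T; pars := Q' |}
| c_ext : forall K T Q k c eB v a1 a2 K' Q',
    Permutation Q (ParRExt k c v eB :: Q') ->
    Permutation K ((a1 ++ spine eB ++ a2, c) :: K') ->
    selected f k a1 a2 ->
    contr f {| combs := K; tens := T; pars := Q |}
            {| combs := (a1 ++ S1 :: a2, v) :: K'; tens := T; pars := Q' |}
| c_inf : forall K T Q k c eA v e1 e2 b K' Q',
    Permutation Q (ParRInf k c eA v :: Q') ->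
    spine eA = e1 ++ S1 :: e2 -> selected f k e1 e2 ->
    Permutation K ((e1 ++ b ++ e2, c) :: K') ->
    contr f {| combs := K; tens := T; pars := Q |}
            {| combs := (b, v) :: K'; tens := T; pars := Q' |}
| c_prod : forall K T Q v1 eA eB g1 g2 v2 K' Q',
    Permutation Q (ParLProd v1 eA eB :: Q') ->
    Permutation K ((g1 ++ spine eA ++ spine eB ++ g2, v2) :: K') ->
    contr f {| combs := K; tens := T; pars := Q |}
            {| combs := (g1 ++ SV v1 :: g2, v2) :: K'; tens := T; pars := Q' |}
| c_wrappar : forall K T Q k v1 eA eB e1 e2 g1 g2 v2 K' Q',
    Permutation Q (ParLWrap k v1 eA eB :: Q') ->
    spine eA = e1 ++ S1 :: e2 -> selected f k e1 e2 ->
    Permutation K ((g1 ++ e1 ++ spine eB ++ e2 ++ g2, v2) :: K') ->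
    contr f {| combs := K; tens := T; pars := Q |}
            {| combs := (g1 ++ SV v1 :: g2, v2) :: K'; tens := T; pars := Q' |}.

(* Main.v *)
Require Import Defs.
From Stdlib Require Import List Relations Permutation Arith Lia Classical_Prop.
Import ListNotations.

Ltac pnorm := repeat rewrite <- app_assoc; repeat rewrite app_nil_r; repeat rewrite app_nil_l.
Ltac rotR := eapply Permutation_trans; [ | apply Permutation_app_comm ]; pnorm.
Ltac psolve := pnorm; do 40 (first [ reflexivity | apply Permutation_app_head | apply perm_skip | rotR ]).
Lemma cons_sing : forall (A : Type) (x : A) l, x :: l = [x] ++ l.
Proof. reflexivity. Qed.
Ltac uncons := repeat match goal with |- context [?x :: ?l] =>
  lazymatch l with nil => fail | _ => rewrite (cons_sing _ x l) end end.
Ltac psolve' := uncons; psolve.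

Lemma vars_spine : forall l, vars (spine l) = l.
Proof.
  induction l as [|p l IH]; [reflexivity|].
  destruct l as [|q l]; [reflexivity|].
  change (vars (SV p :: S1 :: spine (q :: l)) = p :: q :: l).
  simpl vars. unfold vars in IH. simpl. f_equal. exact IH.
Qed.

Lemma ssort_app : forall f a b, ssort f (a ++ b) = ssort f a + ssort f b.
Proof. induction a; intros; simpl; [reflexivity|]. unfold ssort in *. rewrite IHa. lia. Qed.

Lemma ssort_cons : forall f x s, ssort f (x :: s) = match x with S1 => 1 | SV v => f v end + ssort f s.
Proof. reflexivity. Qed.

Lemma ssort_spine : forall f l, (forall p, In p l -> f p = 0) -> ssort f (spine l) = length l - 1.
Proof.
  intros f l. induction l as [|p l IH]; intros H; [reflexivity|].
  destruct l as [|q l].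
  - simpl. rewrite (H p) by (left; auto). reflexivity.
  - change (ssort f (SV p :: S1 :: spine (q :: l)) = length (p :: q :: l) - 1).
    rewrite !ssort_cons, IH by (intros; apply H; right; auto).
    rewrite (H p) by (left; auto). simpl. lia.
Qed.

Lemma spine_in : forall l x, In x (spine l) -> x = S1 \/ exists p, x = SV p /\ In p l.
Proof.
  induction l as [|p l IH]; simpl; intros x Hx; [contradiction|].
  destruct l as [|q l].
  - destruct Hx as [<-|[]]. right. exists p. auto.
  - destruct Hx as [<-|[<-|Hx]]; [right; exists p; auto|left; auto|].
    destruct (IH x Hx) as [?|[r [? ?]]]; auto. right. exists r. simpl in *. tauto.
Qed.

Lemma length_spine_pos : forall l, l <> [] -> spine l <> [].
Proof. intros [|p [|q l]]; simpl; congruence. Qed.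

Section S.
Variable P : pstruct.
Variable fr : nat -> list nat.
Variable FU : list nat.

Definition isv (x : nat) : bool := if in_dec Nat.eq_dec x (pverts P) then true else false.
Definition opens (s : list sym) : list nat :=
  flat_map (fun y => match y with SV x => if isv x then [x] else [] | S1 => [] end) s.
Definition fvars (s : list sym) : list nat :=
  flat_map (fun y => match y with SV x => if isv x then [] else [x] | S1 => [] end) s.
Definition subst (sg : nat -> ctx * str) (s : list sym) : str :=
  flat_map (fun y => match y with SV x => if isv x then snd (sg x) else [SV x] | S1 => [S1] end) s.
Definition ctxC (sg : nat -> ctx * str) (l : list nat) : ctx := flat_map (fun x => fst (sg x)) l.
Definition hypo (o : nat) : str * formula := (spine (fr o), plab P o).
Definition sok (sg : nat -> ctx * str) (l : list nat) : Prop :=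
  forall x, In x l -> nd (fst (sg x)) (snd (sg x)) (plab P x) /\
    incl (vars (snd (sg x))) (ctx_vars (fst (sg x))) /\
    str_sort (snd (sg x)) = sort (plab P x).
Definition Good (L : list nat) (O : list nat) (s : list sym) (v : nat) : Prop :=
  forall sg, sok sg (opens s) ->
    NoDup (flat_map fr O ++ ctx_vars (ctxC sg (opens s))) ->
    (forall z, In z (ctx_vars (ctxC sg (opens s))) -> In z FU -> In z L) ->
    nd (map hypo O ++ ctxC sg (opens s)) (subst sg s) (plab P v).

Lemma isv_true : forall x, isv x = true <-> In x (pverts P).
Proof. intros x; unfold isv; destruct in_dec; split; auto; congruence. Qed.
Lemma isv_false : forall x, isv x = false <-> ~ In x (pverts P).
Proof. intros x; unfold isv; destruct in_dec; split; auto; congruence. Qed.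

Lemma opens_app : forall a b, opens (a ++ b) = opens a ++ opens b.
Proof. intros; unfold opens; apply flat_map_app. Qed.
Lemma fvars_app : forall a b, fvars (a ++ b) = fvars a ++ fvars b.
Proof. intros; unfold fvars; apply flat_map_app. Qed.
Lemma subst_app : forall sg a b, subst sg (a ++ b) = subst sg a ++ subst sg b.
Proof. intros; unfold subst; apply flat_map_app. Qed.
Lemma ctxC_app : forall sg a b, ctxC sg (a ++ b) = ctxC sg a ++ ctxC sg b.
Proof. intros; unfold ctxC; apply flat_map_app. Qed.
Lemma ctx_vars_app : forall a b, ctx_vars (a ++ b) = ctx_vars a ++ ctx_vars b.
Proof. intros; unfold ctx_vars; apply flat_map_app. Qed.
Lemma ctx_vars_hypo : forall O, ctx_vars (map hypo O) = flat_map fr O.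
Proof.
  induction O; simpl; auto. unfold ctx_vars in *. simpl. rewrite vars_spine, IHO. reflexivity.
Qed.
Lemma vars_app : forall a b, vars (a ++ b) = vars a ++ vars b.
Proof. intros; unfold vars; apply flat_map_app. Qed.

Lemma opens_SV : forall x, isv x = true -> opens [SV x] = [x].
Proof. intros x H; unfold opens; simpl; rewrite H; reflexivity. Qed.
Lemma subst_SV : forall sg x, isv x = true -> subst sg [SV x] = snd (sg x).
Proof. intros sg x H; unfold subst; simpl; rewrite H, app_nil_r; reflexivity. Qed.
Lemma fvars_SV : forall x, isv x = true -> fvars [SV x] = [].
Proof. intros x H; unfold fvars; simpl; rewrite H; reflexivity. Qed.

Definition freshl (l : list nat) := forall p, In p l -> ~ In p (pverts P).

Lemma opens_nil_subst : forall sg s, opens s = [] -> subst sg s = s.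
Proof.
  intros sg s. induction s as [|[x|] s IH]; intros H; [reflexivity| |].
  - unfold opens, subst in *; simpl in *. destruct (isv x); [discriminate|]. simpl. f_equal; auto.
  - unfold opens, subst in *; simpl in *. f_equal; auto.
Qed.

Definition abs_f (x : nat) : nat := abs_sort P x.

Lemma abs_f_fresh : forall x, isv x = false -> abs_f x = 0.
Proof. intros x H. apply isv_false in H. unfold abs_f, abs_sort. destruct in_dec; tauto. Qed.
Lemma abs_f_v : forall x, isv x = true -> abs_f x = sort (plab P x).
Proof. intros x H. apply isv_true in H. unfold abs_f, abs_sort. destruct in_dec; tauto. Qed.

Lemma opens_nil_ssort : forall s, opens s = [] -> ssort abs_f s = str_sort s.
Proof.
  intros s. induction s as [|[x|] s IH]; intros H; [reflexivity| |].
  - unfold opens in H; simpl in H. destruct (isv x) eqn:E; [discriminate|].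
    unfold str_sort in *. rewrite !ssort_cons, abs_f_fresh by auto. f_equal; auto.
  - unfold str_sort in *. rewrite !ssort_cons. f_equal; auto.
Qed.

Lemma spine_opens : forall l, freshl l -> opens (spine l) = [].
Proof.
  intros l H. induction l as [|p l IH]; [reflexivity|].
  assert (Hp : isv p = false) by (apply isv_false, H; left; auto).
  destruct l as [|q l].
  - unfold opens; simpl. rewrite Hp. reflexivity.
  - change (opens (SV p :: S1 :: spine (q :: l)) = []).
    unfold opens in *; simpl. rewrite Hp. simpl. apply IH. intros r Hr; apply H; right; auto.
Qed.

Lemma spine_fvars : forall l, freshl l -> fvars (spine l) = l.
Proof.
  intros l H. induction l as [|p l IH]; [reflexivity|].
  assert (Hp : isv p = false) by (apply isv_false, H; left; auto).
  destruct l as [|q l].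
  - unfold fvars; simpl. rewrite Hp. reflexivity.
  - change (fvars (SV p :: S1 :: spine (q :: l)) = p :: q :: l).
    unfold fvars in *; simpl. rewrite Hp. simpl. f_equal. apply IH. intros r Hr; apply H; right; auto.
Qed.

Lemma subst_ext : forall sg sg' s, (forall x, In x (opens s) -> sg x = sg' x) -> subst sg s = subst sg' s.
Proof.
  intros sg sg' s. induction s as [|[x|] s IH]; intros H; [reflexivity| |].
  - unfold opens, subst in *; simpl in *. destruct (isv x) eqn:E.
    + rewrite (H x) by (left; auto). f_equal. apply IH. intros; apply H; right; auto.
    + f_equal; auto.
  - unfold opens, subst in *; simpl in *. f_equal; auto.
Qed.

Lemma ctxC_ext : forall sg sg' l, (forall x, In x l -> sg x = sg' x) -> ctxC sg l = ctxC sg' l.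
Proof.
  intros sg sg' l. induction l; intros H; simpl; auto. unfold ctxC in *; simpl.
  rewrite H by (left; auto). f_equal; auto. apply IHl; intros; apply H; right; auto.
Qed.

Lemma sok_incl : forall sg l l', incl l' l -> sok sg l -> sok sg l'.
Proof. unfold sok; intros; auto. Qed.

Lemma sok_str_sort : forall sg s, sok sg (opens s) -> str_sort (subst sg s) = ssort abs_f s.
Proof.
  intros sg s. induction s as [|[x|] s IH]; intros H; [reflexivity| |].
  - unfold str_sort in *. rewrite ssort_cons.
    destruct (isv x) eqn:E.
    + replace (subst sg (SV x :: s)) with (snd (sg x) ++ subst sg s)
        by (unfold subst; simpl; rewrite E; reflexivity).
      assert (Hx : In x (opens (SV x :: s))) by (unfold opens; simpl; rewrite E; left; auto).
      rewrite ssort_app, abs_f_v by auto.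
      destruct (H x Hx) as (_ & _ & H3). unfold str_sort in H3. rewrite H3.
      f_equal. apply IH. intros y Hy; apply H. unfold opens in *; simpl; rewrite E; right; auto.
    + replace (subst sg (SV x :: s)) with (SV x :: subst sg s)
        by (unfold subst; simpl; rewrite E; reflexivity).
      rewrite ssort_cons, abs_f_fresh by auto. f_equal. apply IH.
      intros y Hy; apply H. unfold opens in *; simpl; rewrite E; auto.
  - unfold str_sort in *. change (subst sg (S1 :: s)) with (S1 :: subst sg s).
    rewrite !ssort_cons. f_equal. apply IH; auto.
Qed.

Lemma sok_vars : forall sg s, sok sg (opens s) ->
  incl (vars (subst sg s)) (fvars s ++ ctx_vars (ctxC sg (opens s))).
Proof.
  intros sg s. induction s as [|[x|] s IH]; intros H; [intros z Hz; inversion Hz| |].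
  - unfold opens, subst, fvars in *; simpl in *. destruct (isv x) eqn:E.
    + simpl. rewrite vars_app. destruct (H x (or_introl eq_refl)) as (_ & H2 & _).
      unfold ctxC in *. simpl. rewrite ctx_vars_app.
      intros z Hz. apply in_app_or in Hz as [Hz|Hz].
      * apply in_or_app. right. apply in_or_app. left. auto.
      * specialize (IH (fun y Hy => H y (or_intror Hy)) z Hz).
        apply in_app_or in IH as [?|?]; apply in_or_app; [left; auto|right; apply in_or_app; right; auto].
    + simpl. intros z [<-|Hz]; [left; auto|]. right. apply IH; auto.
  - unfold opens, subst, fvars in *; simpl in *. apply IH; auto.
Qed.


Ltac dist := repeat (rewrite ?opens_app, ?ctxC_app, ?ctx_vars_app, ?flat_map_app, ?map_app, ?subst_app, ?fvars_app, ?ctx_vars_hypo in *).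

Lemma nodup_perm : forall (l l' : list nat), Permutation l l' -> NoDup l -> NoDup l'.
Proof. intros; eapply Permutation_NoDup; eauto. Qed.

Lemma nodup_disj : forall l1 l2 : list nat, NoDup (l1 ++ l2) -> disj l1 l2.
Proof.
  intros l1 l2 H x H1 H2. induction l1 as [|y l1 IH]; [inversion H1|].
  inversion H; subst. destruct H1 as [<-|H1].
  - apply H4, in_or_app; right; auto.
  - apply IH; auto.
Qed.

Lemma opens_mid : forall a1 a2 w, isv w = true -> opens (a1 ++ SV w :: a2) = opens a1 ++ w :: opens a2.
Proof. intros. rewrite opens_app. change (SV w :: a2) with ([SV w] ++ a2). rewrite opens_app, opens_SV; auto. Qed.
Lemma subst_mid : forall sg a1 a2 w, isv w = true -> subst sg (a1 ++ SV w :: a2) = subst sg a1 ++ snd (sg w) ++ subst sg a2.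
Proof. intros. rewrite subst_app. change (SV w :: a2) with ([SV w] ++ a2). rewrite subst_app, subst_SV; auto. Qed.

Lemma good_plus : forall L Oa Ob a1 a2 b w v,
  isv w = true -> ~ In w (opens a1 ++ opens a2) ->
  Permutation (fvars b) (flat_map fr Ob) -> incl (flat_map fr Ob) L ->
  ssort abs_f b = sort (plab P w) ->
  Good L Oa (a1 ++ SV w :: a2) v -> Good L Ob b w -> Good L (Oa ++ Ob) (a1 ++ b ++ a2) v.
Proof.
  intros L Oa Ob a1 a2 b w v Hw Hnw Hfb HfL Hsb Ha Hb sg Hs Hn HL.
  set (Cb := map hypo Ob ++ ctxC sg (opens b)).
  set (sg' := fun x => if Nat.eq_dec x w then (Cb, subst sg b) else sg x).
  assert (Heq : forall x, In x (opens a1 ++ opens a2) -> sg' x = sg x).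
  { intros x Hx. unfold sg'. destruct Nat.eq_dec; [subst; contradiction|reflexivity]. }
  specialize (Ha sg'). rewrite opens_mid, subst_mid in Ha by auto.
  rewrite ctxC_app in Ha. change (w :: opens a2) with ([w] ++ opens a2) in Ha.
  rewrite ctxC_app in Ha.
  rewrite (ctxC_ext sg' sg (opens a1)), (ctxC_ext sg' sg (opens a2)),
     (subst_ext sg' sg a1), (subst_ext sg' sg a2) in Ha
     by (intros; apply Heq; apply in_or_app; auto).
  assert (Hw' : sg' w = (Cb, subst sg b)) by (unfold sg'; destruct Nat.eq_dec; congruence).
  unfold ctxC at 2 in Ha. simpl in Ha. rewrite Hw' in Ha. simpl in Ha. rewrite app_nil_r in Ha.
  dist.
  assert (HB : nd Cb (subst sg b) (plab P w)).
  { apply Hb. - intros x Hx; apply Hs; rewrite !in_app_iff; tauto.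
    - apply (NoDup_app_remove_r _ (flat_map fr Oa ++ ctx_vars (ctxC sg (opens a1)) ++ ctx_vars (ctxC sg (opens a2)))).
      eapply nodup_perm; [|exact Hn]. psolve.
    - intros z Hz; apply HL. rewrite !in_app_iff; tauto. }
  eapply nd_perm; [|apply Ha].
  - unfold Cb. psolve.
  - intros x Hx. rewrite !in_app_iff in Hx. destruct Hx as [Hx|[Hx|Hx]].
    + rewrite Heq by (apply in_or_app; auto). apply Hs. rewrite !in_app_iff; auto.
    + subst x. rewrite Hw'. simpl. split; [exact HB|split].
      * intros z Hz. apply sok_vars in Hz; [|intros y Hy; apply Hs; rewrite !in_app_iff; auto].
        unfold Cb. dist. apply in_app_or in Hz as [Hz|Hz]; apply in_or_app; [left|right; auto].
        eapply Permutation_in; eauto.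
      * rewrite sok_str_sort; auto. intros y Hy; apply Hs; rewrite !in_app_iff; auto.
    + rewrite Heq by (apply in_or_app; auto). apply Hs. rewrite !in_app_iff; auto.
  - unfold Cb. dist. eapply nodup_perm; [|exact Hn]. psolve.
  - unfold Cb. dist. intros z Hz HF. rewrite !in_app_iff in Hz.
    destruct Hz as [Hz|[[Hz|Hz]|Hz]]; [apply HL; auto; rewrite !in_app_iff; tauto|apply HfL; auto|apply HL; auto; rewrite !in_app_iff; tauto|apply HL; auto; rewrite !in_app_iff; tauto].
Qed.


Definition wrapok k X Y Z := X = Ext k Z Y \/ Y = Inf k X Z \/ Z = Wrap k X Y.
Definition plusok X Y Z := X = Over Z Y \/ Y = Under X Z \/ Z = Prod X Y.

Lemma nd_wrapok : forall k G D a b r X Y Z, nd G a X -> nd D b Y -> wraps k a b r ->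
  disj (ctx_vars G) (ctx_vars D) -> wrapok k X Y Z -> nd (G ++ D) r Z.
Proof.
  intros k G D a b r X Y Z H1 H2 Hw Hd [->|[->| ->]].
  - eapply nd_extE; eauto.
  - eapply nd_infE; eauto.
  - eapply nd_wrapI; eauto.
Qed.

Lemma nd_plusok : forall G D a b X Y Z, nd G a X -> nd D b Y ->
  disj (ctx_vars G) (ctx_vars D) -> plusok X Y Z -> nd (G ++ D) (a ++ b) Z.
Proof.
  intros G D a b X Y Z H1 H2 Hd [->|[->| ->]].
  - eapply nd_overE; eauto.
  - eapply nd_underE; eauto.
  - eapply nd_prodI; eauto.
Qed.

Lemma opens_S1 : forall a1 a2, opens (a1 ++ S1 :: a2) = opens a1 ++ opens a2.
Proof. intros. rewrite opens_app. reflexivity. Qed.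
Lemma subst_S1 : forall sg a1 a2, subst sg (a1 ++ S1 :: a2) = subst sg a1 ++ S1 :: subst sg a2.
Proof. intros. rewrite subst_app. reflexivity. Qed.

Lemma selected_subst : forall sg k a1 a2, sok sg (opens a1) -> sok sg (opens a2) ->
  selected abs_f k a1 a2 -> selected (fun _ => 0) k (subst sg a1) (subst sg a2).
Proof.
  intros sg k a1 a2 H1 H2 Hs. unfold selected in *.
  change (ssort (fun _ => 0)) with str_sort.
  rewrite !sok_str_sort by auto. exact Hs.
Qed.

Lemma good_wrap : forall L O1 O2 a1 a2 b k v1 v2 v,
  Good L O1 (a1 ++ S1 :: a2) v1 -> Good L O2 b v2 -> selected abs_f k a1 a2 ->
  wrapok k (plab P v1) (plab P v2) (plab P v) -> Good L (O1 ++ O2) (a1 ++ b ++ a2) v.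
Proof.
  intros L O1 O2 a1 a2 b k v1 v2 v H1 H2 Hsel Hw sg Hs Hn HL.
  specialize (H1 sg). specialize (H2 sg). rewrite opens_S1, subst_S1 in H1.
  dist.
  assert (Hs1 : sok sg (opens a1 ++ opens a2)) by (intros x Hx; apply Hs; rewrite !in_app_iff in *; tauto).
  assert (Hs2 : sok sg (opens b)) by (intros x Hx; apply Hs; rewrite !in_app_iff in *; tauto).
  assert (Hn' : NoDup ((flat_map fr O1 ++ ctx_vars (ctxC sg (opens a1)) ++ ctx_vars (ctxC sg (opens a2)))
     ++ (flat_map fr O2 ++ ctx_vars (ctxC sg (opens b))))).
  { eapply nodup_perm; [|exact Hn]. psolve. }
  eapply nd_perm; [|eapply nd_wrapok; [apply H1|apply H2| | |exact Hw]].
  - psolve.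
  - auto.
  - eapply NoDup_app_remove_r; exact Hn'.
  - intros z Hz; apply HL; rewrite !in_app_iff in *; tauto.
  - auto.
  - eapply NoDup_app_remove_l; exact Hn'.
  - intros z Hz; apply HL; rewrite !in_app_iff in *; tauto.
  - exists (subst sg a1), (subst sg a2). split; [reflexivity|split; [|reflexivity]].
    apply selected_subst; auto; intros x Hx; apply Hs1; apply in_or_app; auto.
  - dist. apply nodup_disj. exact Hn'.
Qed.

Lemma good_tplus : forall L x y z, isv x = true -> isv y = true -> x <> y ->
  plusok (plab P x) (plab P y) (plab P z) -> Good L [] [SV x; SV y] z.
Proof.
  intros L x y z Hx Hy Hxy Hp sg Hs Hn HL.
  change [SV x; SV y] with ([SV x] ++ [SV y]) in *.
  dist. rewrite !opens_SV, !subst_SV in * by auto. simpl in *.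
  unfold ctxC in *; simpl in *. rewrite !app_nil_r in *.
  apply nd_plusok with (X := plab P x) (Y := plab P y); auto.
  - apply Hs; left; auto.
  - apply Hs; right; left; auto.
  - apply nodup_disj. exact Hn.
Qed.

Lemma good_hyp : forall L h, wf (plab P h) -> NoDup (fr h) -> freshl (fr h) ->
  length (fr h) = S (sort (plab P h)) -> Good L [h] (spine (fr h)) h.
Proof.
  intros L h Hwf Hnd Hfr Hl sg Hs Hn HL.
  rewrite spine_opens, opens_nil_subst by (auto; apply spine_opens; auto).
  simpl. unfold hypo. apply nd_hyp; auto.
  exists (fr h). auto.
Qed.


Lemma disch_facts : forall L L' d FO Cv,
  NoDup d -> incl d FU -> incl L' L -> (forall z, In z L' -> ~ In z d) -> disj d FO ->
  NoDup (FO ++ Cv) -> (forall z, In z Cv -> In z FU -> In z L') ->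
  NoDup (d ++ FO ++ Cv) /\ (forall z, In z Cv -> In z FU -> In z L) /\ disj d (FO ++ Cv).
Proof.
  intros L L' d FO Cv Hd HdF HL' HL'd Hdisj Hn HC.
  assert (D : disj d (FO ++ Cv)).
  { intros z Hz Hz'. apply in_app_or in Hz' as [Hz'|Hz']. - exact (Hdisj z Hz Hz').
    - exact (HL'd z (HC z Hz' (HdF z Hz)) Hz). }
  split; [|split; auto]. apply NoDup_app; auto.
Qed.

Lemma vars_subst_in : forall sg s O, sok sg (opens s) -> Permutation (fvars s) (flat_map fr O) ->
  incl (vars (subst sg s)) (flat_map fr O ++ ctx_vars (ctxC sg (opens s))).
Proof.
  intros sg s O Hs Hp z Hz. apply sok_vars in Hz; auto. apply in_app_or in Hz as [Hz|Hz]; apply in_or_app; auto.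
  left. eapply Permutation_in; eauto.
Qed.

Lemma disj_incl_r : forall a b c : list nat, disj a b -> incl c b -> disj a c.
Proof. intros a b c H Hi z Hz Hc. exact (H z Hz (Hi z Hc)). Qed.

Lemma hyplabel_fr : forall a, NoDup (fr a) -> length (fr a) = S (sort (plab P a)) ->
  hyplabel (spine (fr a)) (sort (plab P a)).
Proof. intros a H1 H2. exists (fr a). auto. Qed.

Lemma good_under : forall L L' a O b c v,
  Good L (a :: O) (spine (fr a) ++ b) c ->
  plab P v = Under (plab P a) (plab P c) ->
  NoDup (fr a) -> freshl (fr a) -> length (fr a) = S (sort (plab P a)) -> incl (fr a) FU ->
  incl L' L -> (forall z, In z L' -> ~ In z (fr a)) ->
  Permutation (fvars b) (flat_map fr O) -> disj (fr a) (flat_map fr O) ->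
  Good L' O b v.
Proof.
  intros L L' a O b c v H Hv Hnd Hfr Hlen HF HL' HL'd Hp Hdj sg Hs Hn HL.
  destruct (disch_facts L L' (fr a) (flat_map fr O) _ Hnd HF HL' HL'd Hdj Hn HL) as (N1 & N2 & N3).
  specialize (H sg). rewrite opens_app, spine_opens, subst_app, opens_nil_subst in H by (auto; apply spine_opens; auto).
  simpl in H. rewrite Hv.
  apply nd_underI with (a := spine (fr a)).
  - apply H; auto; simpl; rewrite <- app_assoc; auto.
  - apply hyplabel_fr; auto.
  - rewrite vars_spine, ctx_vars_app, ctx_vars_hypo. exact N3.
  - rewrite vars_spine. eapply disj_incl_r; [exact N3|]. apply vars_subst_in; auto.
Qed.

Lemma good_over : forall L L' a O b c v,
  Good L (a :: O) (b ++ spine (fr a)) c ->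
  plab P v = Over (plab P c) (plab P a) ->
  NoDup (fr a) -> freshl (fr a) -> length (fr a) = S (sort (plab P a)) -> incl (fr a) FU ->
  incl L' L -> (forall z, In z L' -> ~ In z (fr a)) ->
  Permutation (fvars b) (flat_map fr O) -> disj (fr a) (flat_map fr O) ->
  Good L' O b v.
Proof.
  intros L L' a O b c v H Hv Hnd Hfr Hlen HF HL' HL'd Hp Hdj sg Hs Hn HL.
  destruct (disch_facts L L' (fr a) (flat_map fr O) _ Hnd HF HL' HL'd Hdj Hn HL) as (N1 & N2 & N3).
  specialize (H sg). rewrite opens_app, spine_opens, app_nil_r, subst_app, (opens_nil_subst _ (spine _)) in H by (auto; apply spine_opens; auto).
  simpl in H. rewrite Hv.
  apply nd_overI with (b := spine (fr a)).
  - apply H; auto; simpl; rewrite <- app_assoc; auto.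
  - apply hyplabel_fr; auto.
  - rewrite vars_spine, ctx_vars_app, ctx_vars_hypo. exact N3.
  - rewrite vars_spine. eapply disj_incl_r; [exact N3|]. apply vars_subst_in; auto.
Qed.

Lemma good_ext : forall L L' a O a1 a2 k c v,
  Good L (a :: O) (a1 ++ spine (fr a) ++ a2) c ->
  plab P v = Ext k (plab P c) (plab P a) -> selected abs_f k a1 a2 ->
  NoDup (fr a) -> freshl (fr a) -> length (fr a) = S (sort (plab P a)) -> incl (fr a) FU ->
  incl L' L -> (forall z, In z L' -> ~ In z (fr a)) ->
  Permutation (fvars (a1 ++ S1 :: a2)) (flat_map fr O) -> disj (fr a) (flat_map fr O) ->
  Good L' O (a1 ++ S1 :: a2) v.
Proof.
  intros L L' a O a1 a2 k c v H Hv Hsel Hnd Hfr Hlen HF HL' HL'd Hp Hdj sg Hs Hn HL.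
  destruct (disch_facts L L' (fr a) (flat_map fr O) _ Hnd HF HL' HL'd Hdj Hn HL) as (N1 & N2 & N3).
  specialize (H sg). rewrite !opens_app, spine_opens, !subst_app, (opens_nil_subst _ (spine _)) in H by (auto; apply spine_opens; auto).
  simpl in H. rewrite opens_S1 in *. rewrite subst_S1, Hv.
  apply nd_extI with (b := spine (fr a)) (r := subst sg a1 ++ spine (fr a) ++ subst sg a2).
  - apply H; auto; simpl; rewrite <- app_assoc; auto.
  - exists (subst sg a1), (subst sg a2). split; [reflexivity|split; [|reflexivity]].
    apply selected_subst; auto; intros x Hx; apply Hs; apply in_or_app; auto.
  - apply hyplabel_fr; auto.
  - rewrite vars_spine, ctx_vars_app, ctx_vars_hypo. exact N3.
  - rewrite vars_spine. eapply disj_incl_r; [exact N3|]. rewrite <- subst_S1, <- opens_S1.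
    apply vars_subst_in; auto. rewrite opens_S1; auto.
Qed.

Lemma spine_split_opens : forall a e1 e2, freshl (fr a) -> spine (fr a) = e1 ++ S1 :: e2 ->
  opens e1 = [] /\ opens e2 = [].
Proof.
  intros a e1 e2 Hf He. pose proof (spine_opens _ Hf) as H. rewrite He, opens_S1 in H.
  apply app_eq_nil in H. exact H.
Qed.

Lemma good_inf : forall L L' a O e1 e2 b k c v,
  Good L (a :: O) (e1 ++ b ++ e2) c -> spine (fr a) = e1 ++ S1 :: e2 ->
  plab P v = Inf k (plab P a) (plab P c) -> selected abs_f k e1 e2 ->
  NoDup (fr a) -> freshl (fr a) -> length (fr a) = S (sort (plab P a)) -> incl (fr a) FU ->
  incl L' L -> (forall z, In z L' -> ~ In z (fr a)) ->
  Permutation (fvars b) (flat_map fr O) -> disj (fr a) (flat_map fr O) ->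
  Good L' O b v.
Proof.
  intros L L' a O e1 e2 b k c v H He Hv Hsel Hnd Hfr Hlen HF HL' HL'd Hp Hdj sg Hs Hn HL.
  destruct (disch_facts L L' (fr a) (flat_map fr O) _ Hnd HF HL' HL'd Hdj Hn HL) as (N1 & N2 & N3).
  destruct (spine_split_opens a e1 e2 Hfr He) as [E1 E2].
  specialize (H sg). rewrite !opens_app, E1, E2, app_nil_r, !subst_app, (opens_nil_subst _ e1), (opens_nil_subst _ e2) in H by auto.
  simpl in H. rewrite Hv.
  apply nd_infI with (a := spine (fr a)) (r := e1 ++ subst sg b ++ e2).
  - apply H; auto; simpl; rewrite <- app_assoc; auto.
  - rewrite He. exists e1, e2. split; [reflexivity|split; [|reflexivity]].
    unfold selected in *. change (ssort (fun _ => 0)) with str_sort. rewrite <- !opens_nil_ssort; auto.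
  - apply hyplabel_fr; auto.
  - rewrite vars_spine, ctx_vars_app, ctx_vars_hypo. exact N3.
  - rewrite vars_spine. eapply disj_incl_r; [exact N3|]. apply vars_subst_in; auto.
Qed.


Lemma incl_app_iff' : forall (a b c : list nat), incl (a ++ b) c <-> incl a c /\ incl b c.
Proof. intros; split; [intros H; split; intros z Hz; apply H; apply in_or_app; auto|intros [H1 H2] z Hz; apply in_app_or in Hz as [?|?]; auto]. Qed.

Lemma good_prod : forall L L' a b O g1 g2 v1 v2,
  Good L (a :: b :: O) (g1 ++ spine (fr a) ++ spine (fr b) ++ g2) v2 ->
  isv v1 = true -> plab P v1 = Prod (plab P a) (plab P b) ->
  NoDup (fr a ++ fr b) -> freshl (fr a) -> freshl (fr b) ->
  length (fr a) = S (sort (plab P a)) -> length (fr b) = S (sort (plab P b)) ->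
  incl (fr a ++ fr b) FU ->
  incl L' L -> (forall z, In z L' -> ~ In z (fr a ++ fr b)) ->
  Permutation (fvars g1 ++ fvars g2) (flat_map fr O) -> disj (fr a ++ fr b) (flat_map fr O) ->
  Good L' O (g1 ++ SV v1 :: g2) v2.
Proof.
  intros L L' a b O g1 g2 v1 v2 H Hv1 Hv Hnd Hfa Hfb Hla Hlb HF HL' HL'd Hp Hdj sg Hs Hn HL.
  destruct (disch_facts L L' _ (flat_map fr O) _ Hnd HF HL' HL'd Hdj Hn HL) as (N1 & N2 & N3).
  rewrite opens_mid in * by auto. rewrite subst_mid by auto.
  specialize (H sg). rewrite !opens_app, !spine_opens, !subst_app, (opens_nil_subst _ (spine (fr a))),
    (opens_nil_subst _ (spine (fr b))) in H by (auto; apply spine_opens; auto).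
  simpl in H.
  unfold ctxC in *. rewrite flat_map_app in *. simpl in *. fold (ctxC sg (opens g1)) in *. fold (ctxC sg (opens g2)) in *.
  rewrite ctx_vars_app in N1, N2, N3, HL. rewrite ctx_vars_app in N1, N2, N3, HL.
  set (D0 := fst (sg v1)) in *. set (V1 := ctx_vars (ctxC sg (opens g1))) in *.
  set (V2 := ctx_vars (ctxC sg (opens g2))) in *. set (DV := ctx_vars D0) in *.
  assert (Hs1 : sok sg (opens g1 ++ opens g2)) by (intros x Hx; apply Hs; rewrite !in_app_iff in *; simpl; tauto).
  assert (Hsv : nd D0 (snd (sg v1)) (plab P v1)) by (apply Hs; apply in_or_app; right; left; auto).
  rewrite Hv in Hsv.
  assert (Hg1 : incl (fvars g1) (flat_map fr O)) by (intros z Hz; eapply Permutation_in; [exact Hp|apply in_or_app; auto]).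
  assert (Hg2 : incl (fvars g2) (flat_map fr O)) by (intros z Hz; eapply Permutation_in; [exact Hp|apply in_or_app; auto]).
  eapply nd_perm; [|apply nd_prodE with (D := D0) (G := map hypo O ++ ctxC sg (opens g1) ++ ctxC sg (opens g2))
     (a := spine (fr a)) (b := spine (fr b)) (A := plab P a) (B := plab P b); [exact Hsv| | | | | |]].
  - psolve.
  - apply H.
    + exact Hs1.
    + rewrite ctx_vars_app. fold V1 V2.
      apply (NoDup_app_remove_r _ DV). eapply nodup_perm; [|exact N1]. psolve.
    + rewrite ctx_vars_app. fold V1 V2. intros z Hz; apply N2; rewrite !in_app_iff in *; tauto.
  - apply hyplabel_fr; auto. eapply NoDup_app_remove_r; eauto.
  - apply hyplabel_fr; auto. eapply NoDup_app_remove_l; eauto.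
  - rewrite !vars_spine. apply nodup_disj; auto.
  - rewrite !vars_spine. eapply disj_incl_r; [exact N3|].
    rewrite ctx_vars_app, ctx_vars_app, ctx_vars_hypo. fold V1 V2.
    repeat rewrite incl_app_iff'. repeat split; try (intros z Hz; rewrite !in_app_iff; tauto).
    + intros z Hz. apply sok_vars in Hz; [|intros x Hx; apply Hs1; apply in_or_app; auto].
      fold V1 in Hz. apply in_app_or in Hz as [Hz|Hz]; [apply Hg1 in Hz|]; rewrite !in_app_iff; tauto.
    + intros z Hz. apply sok_vars in Hz; [|intros x Hx; apply Hs1; apply in_or_app; auto].
      fold V2 in Hz. apply in_app_or in Hz as [Hz|Hz]; [apply Hg2 in Hz|]; rewrite !in_app_iff; tauto.
  - rewrite ctx_vars_app, ctx_vars_app, ctx_vars_hypo. fold V1 V2.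
    apply nodup_disj. apply (NoDup_app_remove_r _ (fr a ++ fr b)). eapply nodup_perm; [|exact N1]. psolve.
Qed.
Lemma good_wrappar : forall L L' a b O g1 g2 e1 e2 k v1 v2,
  Good L (a :: b :: O) (g1 ++ e1 ++ spine (fr b) ++ e2 ++ g2) v2 ->
  spine (fr a) = e1 ++ S1 :: e2 -> selected abs_f k e1 e2 ->
  isv v1 = true -> plab P v1 = Wrap k (plab P a) (plab P b) ->
  NoDup (fr a ++ fr b) -> freshl (fr a) -> freshl (fr b) ->
  length (fr a) = S (sort (plab P a)) -> length (fr b) = S (sort (plab P b)) ->
  incl (fr a ++ fr b) FU ->
  incl L' L -> (forall z, In z L' -> ~ In z (fr a ++ fr b)) ->
  Permutation (fvars g1 ++ fvars g2) (flat_map fr O) -> disj (fr a ++ fr b) (flat_map fr O) ->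
  Good L' O (g1 ++ SV v1 :: g2) v2.
Proof.
  intros L L' a b O g1 g2 e1 e2 k v1 v2 H He Hsel Hv1 Hv Hnd Hfa Hfb Hla Hlb HF HL' HL'd Hp Hdj sg Hs Hn HL.
  destruct (disch_facts L L' _ (flat_map fr O) _ Hnd HF HL' HL'd Hdj Hn HL) as (N1 & N2 & N3).
  rewrite opens_mid in * by auto. rewrite subst_mid by auto.
  destruct (spine_split_opens a e1 e2 Hfa He) as [E1 E2].
  specialize (H sg). rewrite !opens_app, !spine_opens, E1, E2, !subst_app, (opens_nil_subst _ e1),
    (opens_nil_subst _ e2), (opens_nil_subst _ (spine (fr b))) in H by (auto; apply spine_opens; auto).
  simpl in H. rewrite (app_assoc e1), (app_assoc (e1 ++ spine (fr b))), <- (app_assoc e1) in H.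
  unfold ctxC in *. rewrite flat_map_app in *. simpl in *. fold (ctxC sg (opens g1)) in *. fold (ctxC sg (opens g2)) in *.
  rewrite ctx_vars_app in N1, N2, N3, HL. rewrite ctx_vars_app in N1, N2, N3, HL.
  set (D0 := fst (sg v1)) in *. set (V1 := ctx_vars (ctxC sg (opens g1))) in *.
  set (V2 := ctx_vars (ctxC sg (opens g2))) in *. set (DV := ctx_vars D0) in *.
  assert (Hs1 : sok sg (opens g1 ++ opens g2)) by (intros x Hx; apply Hs; rewrite !in_app_iff in *; simpl; tauto).
  assert (Hsv : nd D0 (snd (sg v1)) (plab P v1)) by (apply Hs; apply in_or_app; right; left; auto).
  rewrite Hv in Hsv.
  assert (Hg1 : incl (fvars g1) (flat_map fr O)) by (intros z Hz; eapply Permutation_in; [exact Hp|apply in_or_app; auto]).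
  assert (Hg2 : incl (fvars g2) (flat_map fr O)) by (intros z Hz; eapply Permutation_in; [exact Hp|apply in_or_app; auto]).
  eapply nd_perm; [|apply nd_wrapE with (k := k) (w := e1 ++ spine (fr b) ++ e2) (D := D0) (G := map hypo O ++ ctxC sg (opens g1) ++ ctxC sg (opens g2))
     (a := spine (fr a)) (b := spine (fr b)) (A := plab P a) (B := plab P b); [exact Hsv| | | | | | |]].
  - psolve.
  - apply H.
    + exact Hs1.
    + rewrite ctx_vars_app. fold V1 V2.
      apply (NoDup_app_remove_r _ DV). eapply nodup_perm; [|exact N1]. psolve.
    + rewrite ctx_vars_app. fold V1 V2. intros z Hz; apply N2; rewrite !in_app_iff in *; tauto.
  - rewrite He. exists e1, e2. split; [reflexivity|split; [|reflexivity]].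
    unfold selected in *. change (ssort (fun _ => 0)) with str_sort. rewrite <- !opens_nil_ssort; auto.
  - apply hyplabel_fr; auto. eapply NoDup_app_remove_r; eauto.
  - apply hyplabel_fr; auto. eapply NoDup_app_remove_l; eauto.
  - rewrite !vars_spine. apply nodup_disj; auto.
  - rewrite !vars_spine. eapply disj_incl_r; [exact N3|].
    rewrite ctx_vars_app, ctx_vars_app, ctx_vars_hypo. fold V1 V2.
    repeat rewrite incl_app_iff'. repeat split; try (intros z Hz; rewrite !in_app_iff; tauto).
    + intros z Hz. apply sok_vars in Hz; [|intros x Hx; apply Hs1; apply in_or_app; auto].
      fold V1 in Hz. apply in_app_or in Hz as [Hz|Hz]; [apply Hg1 in Hz|]; rewrite !in_app_iff; tauto.
    + intros z Hz. apply sok_vars in Hz; [|intros x Hx; apply Hs1; apply in_or_app; auto].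
      fold V2 in Hz. apply in_app_or in Hz as [Hz|Hz]; [apply Hg2 in Hz|]; rewrite !in_app_iff; tauto.
  - rewrite ctx_vars_app, ctx_vars_app, ctx_vars_hypo. fold V1 V2.
    apply nodup_disj. apply (NoDup_app_remove_r _ (fr a ++ fr b)). eapply nodup_perm; [|exact N1]. psolve.
Qed.

Variable hs : list nat.
Definition U := hs ++ all_auxs P.
Hypothesis HFU : FU = flat_map fr U.
Hypothesis Hfa : fresh_assignment P hs fr.
Hypothesis Hps : proof_structure P.
Hypothesis Hhs : forall v, In v hs <-> is_hyp P v.

Definition parvars (p : par) : list nat :=
  match p with
  | ParLProd _ eA eB | ParLWrap _ _ eA eB => eA ++ eB
  | ParROver _ _ eB | ParRExt _ _ _ eB => eB
  | ParRUnder _ eA _ | ParRInf _ _ eA _ => eA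
  end.
Definition parprem (p : par) : nat :=
  match p with
  | ParLProd v _ _ | ParLWrap _ v _ _ | ParROver v _ _ | ParRUnder v _ _
  | ParRExt _ v _ _ | ParRInf _ v _ _ => v
  end.
Definition parmain (p : par) : list nat :=
  match p with
  | ParLProd _ _ _ | ParLWrap _ _ _ _ => []
  | ParROver _ v _ | ParRExt _ _ v _ | ParRUnder _ _ v | ParRInf _ _ _ v => [v]
  end.
Definition tprems (t : mode * nat * nat * nat) : list nat :=
  let '(_, x, y, _) := t in [x; y].
Definition tconcl (t : mode * nat * nat * nat) : nat :=
  let '(_, _, _, z) := t in z.

Definition Live (K : list (list sym * nat)) : list nat := flat_map (fun p => fvars (fst p)) K.
Definition Dm (X : aps) : list nat :=
  flat_map (fun p => opens (fst p)) (combs X) ++ flat_map tprems (tens X) ++ map parprem (pars X).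
Definition Sp (X : aps) : list nat :=
  map snd (combs X) ++ map tconcl (tens X) ++ flat_map parmain (pars X).

Definition CombOK (L : list nat) (p : list sym * nat) : Prop :=
  In (snd p) (pverts P) /\ ssort abs_f (fst p) = sort (plab P (snd p)) /\
  exists O, incl O U /\ Permutation (fvars (fst p)) (flat_map fr O) /\ Good L O (fst p) (snd p).

Definition X0 := abstract P hs fr.

Definition Inv (X : aps) : Prop :=
  (forall p, In p (combs X) -> CombOK (Live (combs X)) p) /\
  Permutation (Live (combs X)) (flat_map fr hs ++ flat_map parvars (pars X)) /\
  NoDup (Live (combs X)) /\
  incl (tens X) (tens X0) /\ incl (pars X) (pars X0) /\
  NoDup (Dm X) /\ incl (Dm X) (Sp X) /\ incl (Dm X) (flat_map prems (plinks P)).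

Lemma Good_mono : forall L L' O s v, incl L' L -> Good L O s v -> Good L' O s v.
Proof. intros L L' O s v Hi H sg H1 H2 H3. apply H; auto. Qed.

Lemma CombOK_mono : forall L L' p, incl L' L -> CombOK L p -> CombOK L' p.
Proof.
  intros L L' [s v] Hi (H1 & H2 & O & H3 & H4 & H5). split; [|split]; auto.
  exists O. repeat split; auto. eapply Good_mono; eauto.
Qed.

Lemma Live_perm : forall K K', Permutation K K' -> Permutation (Live K) (Live K').
Proof. intros. unfold Live. apply Permutation_flat_map. auto. Qed.

Lemma Live_app : forall K K', Live (K ++ K') = Live K ++ Live K'.
Proof. intros; unfold Live; apply flat_map_app. Qed.

Lemma I5_step : forall (D S Dn Sn R : list nat),
  NoDup D -> incl D S -> Permutation D (R ++ Dn) -> Permutation S (R ++ Sn) ->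
  NoDup Dn /\ incl Dn Sn.
Proof.
  intros D S Dn Sn R HN HI HD HS.
  assert (N : NoDup (R ++ Dn)) by (eapply Permutation_NoDup; eauto).
  split; [eapply NoDup_app_remove_l; eauto|].
  intros x Hx. assert (Hx' : In x S) by (apply HI; eapply Permutation_in; [symmetry; exact HD|apply in_or_app; auto]).
  eapply Permutation_in in Hx'; [|exact HS]. apply in_app_or in Hx' as [Hr|Hr]; auto.
  exfalso. exact (nodup_disj _ _ N x Hr Hx).
Qed.


Lemma fr_unique : forall L x y z, NoDup (flat_map fr L) -> In x L -> In y L -> In z (fr x) -> In z (fr y) -> x = y.
Proof.
  induction L as [|w L IH]; intros x y z HN Hx Hy Hzx Hzy; [inversion Hx|].
  simpl in HN. destruct Hx as [<-|Hx]; destruct Hy as [<-|Hy]; auto.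
  - exfalso. apply (nodup_disj _ _ HN z Hzx). apply in_flat_map. eauto.
  - exfalso. apply (nodup_disj _ _ HN z Hzy). apply in_flat_map. eauto.
  - eapply IH; eauto. eapply NoDup_app_remove_l; eauto.
Qed.

Lemma nodup_flat_map_sub : forall L x, NoDup (flat_map fr L) -> In x L -> NoDup (fr x).
Proof.
  induction L as [|w L IH]; intros x HN Hx; [inversion Hx|]. simpl in HN.
  destruct Hx as [<-|Hx]; [eapply NoDup_app_remove_r; eauto|]. apply IH; auto. eapply NoDup_app_remove_l; eauto.
Qed.

Lemma fr_nodup : forall x, In x U -> NoDup (fr x).
Proof. intros x Hx. destruct Hfa as (_ & HN & _). eapply nodup_flat_map_sub; eauto. Qed.
Lemma fr_fresh : forall x, In x U -> freshl (fr x).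
Proof. intros x Hx p Hp. destruct Hfa as (_ & _ & HD). apply HD. apply in_flat_map. eauto. Qed.
Lemma fr_FU : forall x, In x U -> incl (fr x) FU.
Proof. intros x Hx p Hp. rewrite HFU. apply in_flat_map. eauto. Qed.
Lemma fr_len : forall x, In x U -> length (fr x) = S (sort (plab P x)).
Proof. intros x Hx. destruct Hfa as (HL & _ & _). apply HL. exact Hx. Qed.
Lemma fr_ne : forall x, In x U -> exists z, In z (fr x).
Proof. intros x Hx. pose proof (fr_len x Hx). destruct (fr x) as [|z l]; [discriminate|]. exists z; left; auto. Qed.

Lemma owner : forall O a z, incl O U -> In a U -> In z (fr a) -> In z (flat_map fr O) -> In a O.
Proof.
  intros O a z HO Ha Hz HzO. apply in_flat_map in HzO as (o & Ho & Hzo).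
  destruct Hfa as (_ & HN & _).
  assert (o = a) by (eapply fr_unique; [exact HN|apply HO; auto|exact Ha|exact Hzo|exact Hz]).
  subst; auto.
Qed.

Lemma extract : forall (O : list nat) a, In a O -> exists O', Permutation O (a :: O').
Proof.
  intros O a H. apply in_split in H as (l1 & l2 & ->). exists (l1 ++ l2).
  symmetry. apply Permutation_middle.
Qed.

Lemma auxs_concls : forall l a, In a (auxs l) -> In a (concls l).
Proof. intros l x H; destruct l; simpl in *; tauto. Qed.

Lemma in_pverts_aux : forall a, In a (all_auxs P) -> In a (pverts P).
Proof.
  intros a Ha. unfold all_auxs in Ha. apply in_flat_map in Ha as (l & Hl & Ha).
  destruct Hps as (_ & _ & Hlk & _). destruct (Hlk l Hl) as (_ & _ & Hi). apply Hi.
  apply in_or_app; right. apply auxs_concls; auto.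
Qed.

Lemma in_pverts_U : forall a, In a U -> In a (pverts P).
Proof.
  intros a Ha. apply in_app_or in Ha as [Ha|Ha]; [apply Hhs in Ha; apply Ha|apply in_pverts_aux; auto].
Qed.

Lemma wf_pverts : forall v, In v (pverts P) -> wf (plab P v).
Proof. intros v Hv. destruct Hps as (_ & Hwf & _). auto. Qed.

Lemma plusok_sort : forall X Y Z, plusok X Y Z -> wf X -> wf Y -> wf Z -> sort Z = sort X + sort Y.
Proof. intros X Y Z [->|[->| ->]]; simpl; intros; try tauto; lia. Qed.

Lemma wrapok_sort : forall k X Y Z, wrapok k X Y Z -> wf X -> wf Y -> wf Z -> 1 <= sort X -> sort Z = sort X + sort Y - 1.
Proof. intros k X Y Z [->|[->| ->]]; simpl; intros; lia. Qed.

Lemma CombOK_hyp : forall L h, In h U -> CombOK L (spine (fr h), h).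
Proof.
  intros L h Hh. unfold CombOK; cbn [fst snd]. pose proof (in_pverts_U h Hh) as Hv. split; [auto|split].
  - rewrite ssort_spine, fr_len by (auto; intros p Hp; apply abs_f_fresh, isv_false, (fr_fresh h Hh); auto). lia.
  - exists [h]. split; [intros x [<-|[]]; auto|split].
    + rewrite spine_fvars by (apply fr_fresh; auto). simpl. rewrite app_nil_r. reflexivity.
    + apply good_hyp; auto using fr_nodup, fr_fresh, fr_len, wf_pverts.
Qed.

Lemma CombOK_plus : forall L x y z, In x (pverts P) -> In y (pverts P) -> In z (pverts P) -> x <> y ->
  plusok (plab P x) (plab P y) (plab P z) -> CombOK L ([SV x; SV y], z).
Proof.
  intros L x y z Hx Hy Hz Hxy Hpl.
  assert (Hxv := proj2 (isv_true x) Hx); assert (Hyv := proj2 (isv_true y) Hy).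
  unfold CombOK; cbn [fst snd]. split; [auto|split].
  - unfold ssort; simpl; rewrite !abs_f_v by auto. rewrite (plusok_sort _ _ _ Hpl) by (apply wf_pverts; auto); lia.
  - exists []. split; [intros ? []|split].
    + unfold fvars; simpl; rewrite Hxv, Hyv; reflexivity.
    + apply good_tplus; auto.
Qed.

Lemma CombOK_tens : forall L l p, In l (plinks P) -> In p (abs_comb l) -> CombOK L p.
Proof.
  intros L l p Hl Hp. destruct Hps as (_ & _ & Hlk & _). destruct (Hlk l Hl) as (Hok & HN & Hi).
  destruct l as [x y z|x y z|x y z|k x y z|k x y z|k x y z|x y z|k x y z|x y z|x y z|k x y z|k x y z];
  simpl in Hp; try contradiction; destruct Hp as [<-|[]]; simpl in *;
  (apply CombOK_plus; [apply Hi; simpl; tauto|apply Hi; simpl; tauto|apply Hi; simpl; tauto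
    |intro E; subst; inversion HN; subst; simpl in *; tauto|unfold plusok; tauto]).
Qed.


Lemma existsb_in : forall v l, In v l -> existsb (Nat.eqb v) l = true.
Proof. intros v l H. apply existsb_exists. exists v. split; auto. apply Nat.eqb_refl. Qed.

Lemma count_cons : forall v f l L, count_in v f (l :: L) =
  (if existsb (Nat.eqb v) (f l) then 1 else 0) + count_in v f L.
Proof. intros. unfold count_in. simpl. destruct existsb; reflexivity. Qed.

Lemma count_pos : forall v f L l, In l L -> In v (f l) -> 1 <= count_in v f L.
Proof.
  induction L as [|l' L IH]; intros l Hl Hv; [inversion Hl|]. rewrite count_cons.
  destruct Hl as [<-|Hl]; [rewrite existsb_in by auto; lia|]. specialize (IH l Hl Hv). lia.
Qed.

Lemma nodup_flat_prems : forall (f : link -> list nat) L, (forall v, count_in v f L <= 1) ->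
  (forall l, In l L -> NoDup (f l)) -> NoDup (flat_map f L).
Proof.
  intros f. induction L as [|l L IH]; intros Hc Hn; [constructor|]. simpl. apply NoDup_app.
  - apply Hn; left; auto.
  - apply IH; [intros v; specialize (Hc v); rewrite count_cons in Hc; lia|intros; apply Hn; right; auto].
  - intros v Hv Hv'. apply in_flat_map in Hv' as (l' & Hl' & Hv'). specialize (Hc v).
    rewrite count_cons, existsb_in in Hc by auto. pose proof (count_pos v f L l' Hl' Hv'). lia.
Qed.

Lemma Live_combs_tens : forall L, incl L (plinks P) -> Live (flat_map abs_comb L) = [].
Proof.
  induction L as [|l L IH]; intros Hi; [reflexivity|]. simpl. rewrite Live_app, IH by (intros z Hz; apply Hi; right; auto).
  destruct Hps as (_ & _ & Hlk & _). destruct (Hlk l (Hi l (or_introl eq_refl))) as (_ & _ & Hin).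
  destruct l as [x y z|x y z|x y z|k x y z|k x y z|k x y z|x y z|k x y z|x y z|x y z|k x y z|k x y z];
  simpl; try reflexivity;
  (assert (Hx : isv x = true) by (apply isv_true; apply Hin; simpl; tauto));
  (assert (Hy : isv y = true) by (apply isv_true; apply Hin; simpl; tauto));
  unfold Live, fvars; simpl; rewrite Hx, Hy; reflexivity.
Qed.

Lemma Live_hyps : forall L, incl L U -> Live (map (fun h => (spine (fr h), h)) L) = flat_map fr L.
Proof.
  induction L as [|h L IH]; intros Hi; [reflexivity|]. simpl.
  change (Live ((spine (fr h), h) :: map (fun h => (spine (fr h), h)) L)) with
    (fvars (spine (fr h)) ++ Live (map (fun h => (spine (fr h), h)) L)).
  rewrite IH by (intros z Hz; apply Hi; right; auto).
  rewrite spine_fvars by (apply fr_fresh; apply Hi; left; auto).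
  reflexivity.
Qed.

Lemma parvars_abs : forall L, flat_map parvars (flat_map (abs_par fr) L) = flat_map fr (flat_map auxs L).
Proof.
  induction L as [|l L IH]; [reflexivity|]. simpl. rewrite !flat_map_app, IH. f_equal.
  destruct l; simpl; rewrite ?app_nil_r; reflexivity.
Qed.

Lemma U_incl_hs : incl hs U.
Proof. intros z Hz; apply in_or_app; auto. Qed.
Lemma U_incl_aux : incl (all_auxs P) U.
Proof. intros z Hz; apply in_or_app; auto. Qed.

Lemma combs_X0 : combs X0 = flat_map abs_comb (plinks P) ++ map (fun h => (spine (fr h), h)) hs
   ++ map (fun a => (spine (fr a), a)) (all_auxs P).
Proof. reflexivity. Qed.

Lemma Live_X0 : Live (combs X0) = flat_map fr hs ++ flat_map fr (all_auxs P).
Proof.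
  rewrite combs_X0, !Live_app, Live_combs_tens, !Live_hyps; auto using U_incl_hs, U_incl_aux. intros z; auto.
Qed.

Lemma opens_hyps : forall L, incl L U -> flat_map (fun p => opens (fst p)) (map (fun h => (spine (fr h), h)) L) = [].
Proof.
  induction L as [|h L IH]; intros Hi; [reflexivity|]. simpl. rewrite spine_opens, IH; auto.
  - intros z Hz; apply Hi; right; auto.
  - apply fr_fresh; apply Hi; left; auto.
Qed.

Lemma Dm_X0_perm : forall L, incl L (plinks P) ->
  Permutation (flat_map (fun p => opens (fst p)) (flat_map abs_comb L) ++ flat_map tprems (flat_map abs_tens L)
    ++ map parprem (flat_map (abs_par fr) L)) (flat_map prems L).
Proof.
  induction L as [|l L IH]; intros Hi; [reflexivity|]. simpl. rewrite !flat_map_app, map_app.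
  assert (IH' := IH (fun z Hz => Hi z (or_intror Hz))).
  assert (E : flat_map (fun p => opens (fst p)) (abs_comb l) ++ flat_map tprems (abs_tens l) ++ map parprem (abs_par fr l) = prems l).
  { destruct Hps as (_ & _ & Hlk & _). destruct (Hlk l (Hi l (or_introl eq_refl))) as (_ & _ & Hin).
    destruct l as [x y z|x y z|x y z|k x y z|k x y z|k x y z|x y z|k x y z|x y z|x y z|k x y z|k x y z];
    simpl; try reflexivity;
    (assert (Hx : isv x = true) by (apply isv_true; apply Hin; simpl; tauto));
    (assert (Hy : isv y = true) by (apply isv_true; apply Hin; simpl; tauto));
    unfold opens; simpl; rewrite Hx, Hy; reflexivity. }
  rewrite <- E. eapply Permutation_trans; [|apply Permutation_app_head; exact IH']. psolve.
Qed.

Lemma Dm_X0 : Permutation (Dm X0) (flat_map prems (plinks P)).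
Proof.
  unfold Dm. rewrite combs_X0, !flat_map_app, !opens_hyps by auto using U_incl_hs, U_incl_aux.
  rewrite !app_nil_r. apply Dm_X0_perm. intros z; auto.
Qed.


Lemma Sp_X0_combs : forall p, In p (combs X0) -> In (snd p) (Sp X0).
Proof. intros p Hp. unfold Sp. apply in_or_app; left. apply in_map; auto. Qed.

Lemma concl_supplied : forall l x, In l (plinks P) -> In x (concls l) -> In x (Sp X0).
Proof.
  intros l x Hl Hx.
  assert (Haux : In x (auxs l) -> In x (Sp X0)).
  { intros Ha. apply (Sp_X0_combs (spine (fr x), x)). rewrite combs_X0. apply in_or_app; right; apply in_or_app; right.
    apply in_map_iff. exists x. split; auto. unfold all_auxs. apply in_flat_map. eauto. }
  assert (Hpar : forall p, In p (abs_par fr l) -> In x (parmain p) -> In x (Sp X0)).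
  { intros p Hp Hm. unfold Sp. apply in_or_app; right; apply in_or_app; right. apply in_flat_map. exists p.
    split; auto. simpl. apply in_flat_map. eauto. }
  assert (Htens : forall t, In t (abs_tens l) -> tconcl t = x -> In x (Sp X0)).
  { intros t Ht Hc. unfold Sp. apply in_or_app; right; apply in_or_app; left. apply in_map_iff. exists t.
    split; auto. simpl. apply in_flat_map. eauto. }
  assert (Hcomb : forall p, In p (abs_comb l) -> snd p = x -> In x (Sp X0)).
  { intros p Hp Hc. subst x. apply Sp_X0_combs. rewrite combs_X0. apply in_or_app; left. apply in_flat_map. eauto. }
  destruct l as [a b c|a b c|a b c|k a b c|k a b c|k a b c|a b c|k a b c|a b c|a b c|k a b c|k a b c];
  simpl in Hx.
  - destruct Hx as [<-|[]]. eapply Hcomb; [left; reflexivity|reflexivity].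
  - destruct Hx as [<-|[]]. eapply Hcomb; [left; reflexivity|reflexivity].
  - destruct Hx as [<-|[]]. eapply Hcomb; [left; reflexivity|reflexivity].
  - destruct Hx as [<-|[]]. eapply Htens; [left; reflexivity|reflexivity].
  - destruct Hx as [<-|[]]. eapply Htens; [left; reflexivity|reflexivity].
  - destruct Hx as [<-|[]]. eapply Htens; [left; reflexivity|reflexivity].
  - apply Haux. exact Hx.
  - apply Haux. exact Hx.
  - destruct Hx as [<-|[<-|[]]]; [eapply Hpar; [left; reflexivity|left; reflexivity]|apply Haux; left; auto].
  - destruct Hx as [<-|[<-|[]]]; [apply Haux; left; auto|eapply Hpar; [left; reflexivity|left; reflexivity]].
  - destruct Hx as [<-|[<-|[]]]; [eapply Hpar; [left; reflexivity|left; reflexivity]|apply Haux; left; auto].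
  - destruct Hx as [<-|[<-|[]]]; [apply Haux; left; auto|eapply Hpar; [left; reflexivity|left; reflexivity]].
Qed.

Lemma prem_supplied : forall x, In x (flat_map prems (plinks P)) -> In x (Sp X0).
Proof.
  intros x Hx. apply in_flat_map in Hx as (l & Hl & Hx).
  destruct Hps as (_ & _ & Hlk & _). destruct (Hlk l Hl) as (_ & _ & Hin).
  assert (Hv : In x (pverts P)) by (apply Hin; apply in_or_app; auto).
  destruct (Classical_Prop.classic (exists l', In l' (plinks P) /\ In x (concls l'))) as [(l' & Hl' & Hx')|Hn].
  - eapply concl_supplied; eauto.
  - assert (Hh : In x hs) by (apply Hhs; split; auto; intros l' Hl' Hx'; apply Hn; eauto).
    apply (Sp_X0_combs (spine (fr x), x)). rewrite combs_X0. apply in_or_app; right; apply in_or_app; left.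
    apply in_map_iff. eauto.
Qed.

Lemma Inv_X0 : Inv X0.
Proof.
  split; [|split; [|split; [|split; [|split; [|split; [|split]]]]]].
  - intros p Hp. pose proof Hp as Hp'. rewrite combs_X0 in Hp'. apply in_app_or in Hp' as [Hp'|Hp'].
    + apply in_flat_map in Hp' as (l & Hl & Hp'). eapply CombOK_tens; eauto.
    + apply in_app_or in Hp' as [Hp'|Hp']; apply in_map_iff in Hp' as (h & <- & Hh); apply CombOK_hyp;
      apply in_or_app; auto.
  - rewrite Live_X0. unfold X0, abstract. simpl. rewrite parvars_abs. reflexivity.
  - rewrite Live_X0, <- flat_map_app. destruct Hfa as (_ & HN & _). exact HN.
  - intros z; auto.
  - intros z; auto.
  - eapply Permutation_NoDup; [symmetry; apply Dm_X0|]. destruct Hps as (_ & _ & Hlk & Hc & _).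
    apply nodup_flat_prems; auto. intros l Hl. destruct (Hlk l Hl) as (_ & HN & _). eapply NoDup_app_remove_r; eauto.
  - intros z Hz. apply prem_supplied. eapply Permutation_in; [apply Dm_X0|auto].
  - intros z Hz. eapply Permutation_in; [apply Dm_X0|auto].
Qed.


Lemma nodup_owners : forall O, incl O U -> NoDup (flat_map fr O) -> NoDup O.
Proof.
  induction O as [|o O IH]; intros Hi HN; constructor.
  - intro Ho. simpl in HN. destruct (fr_ne o (Hi o (or_introl eq_refl))) as [z Hz].
    apply (nodup_disj _ _ HN z Hz). apply in_flat_map; eauto.
  - apply IH; [intros z Hz; apply Hi; right; auto|]. simpl in HN. eapply NoDup_app_remove_l; eauto.
Qed.

Lemma owners_perm : forall O O', incl O U -> incl O' U -> NoDup (flat_map fr O) ->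
  Permutation (flat_map fr O) (flat_map fr O') -> Permutation O O'.
Proof.
  intros O O' Hi Hi' HN Hp.
  assert (HN' : NoDup (flat_map fr O')) by (eapply Permutation_NoDup; eauto).
  apply NoDup_Permutation; try (apply nodup_owners; auto).
  destruct Hfa as (_ & HU & _).
  intros x; split; intros Hx.
  - destruct (fr_ne x (Hi x Hx)) as [z Hz].
    assert (Hz' : In z (flat_map fr O')) by (eapply Permutation_in; [exact Hp|apply in_flat_map; eauto]).
    eapply owner; eauto.
  - destruct (fr_ne x (Hi' x Hx)) as [z Hz].
    assert (Hz' : In z (flat_map fr O)) by (eapply Permutation_in; [symmetry; exact Hp|apply in_flat_map; eauto]).
    eapply owner; eauto.
Qed.

Lemma Inv_final : forall gamma c, Inv {| combs := [(gamma, c)]; tens := []; pars := [] |} ->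
  is_concl P c -> NoDup hs -> nd (map (fun h => (spine (fr h), plab P h)) hs) gamma (plab P c).
Proof.
  intros gamma c (I1 & I3 & I2 & _ & _ & I5a & I5b & I5c) Hc Hhs'.
  unfold Dm, Sp in *; simpl in *. rewrite !app_nil_r in *.
  assert (Hop : opens gamma = []).
  { destruct (opens gamma) as [|x l] eqn:E; auto. exfalso.
    assert (Hx : In x (x :: l)) by (left; auto).
    pose proof (I5b x Hx) as [Hxc|[]]. subst x. apply I5c in Hx. apply in_flat_map in Hx as (l' & Hl' & Hx').
    exact (proj2 Hc l' Hl' Hx'). }
  destruct (I1 (gamma, c) (or_introl eq_refl)) as (_ & _ & O & HO & Hp & HG). cbn [fst snd] in *.
  unfold Live in I3. simpl in I3. rewrite ?app_nil_r in I3.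
  assert (HPO : Permutation O hs).
  { apply owners_perm; auto using U_incl_hs.
    - eapply Permutation_NoDup; [exact Hp|]. exact I2.
    - rewrite <- Hp. exact I3. }
  specialize (HG (fun _ => ([], []))). rewrite Hop in HG. simpl in HG.
  rewrite opens_nil_subst in HG by auto. rewrite !app_nil_r in HG.
  eapply nd_perm; [|apply HG].
  - apply Permutation_map. exact HPO.
  - intros ? [].
  - eapply Permutation_NoDup; [exact Hp|]. exact I2.
  - intros z [].
Qed.


Lemma fm_perm : forall (A B : Type) (f : A -> list B) K K', Permutation K K' -> Permutation (flat_map f K) (flat_map f K').
Proof. intros. apply Permutation_flat_map. auto. Qed.

Lemma I1_rest : forall L L' K K' p q, Permutation K (p :: q :: K') ->
  (forall r, In r K -> CombOK L r) -> incl L' L -> forall r, In r K' -> CombOK L' r.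
Proof.
  intros L L' K K' p q HP H Hi r Hr. eapply CombOK_mono; [exact Hi|]. apply H.
  eapply Permutation_in; [symmetry; exact HP|right; right; auto].
Qed.

Lemma I1_rest1 : forall L L' K K' p, Permutation K (p :: K') ->
  (forall r, In r K -> CombOK L r) -> incl L' L -> forall r, In r K' -> CombOK L' r.
Proof.
  intros L L' K K' p HP H Hi r Hr. eapply CombOK_mono; [exact Hi|]. apply H.
  eapply Permutation_in; [symmetry; exact HP|right; auto].
Qed.

Lemma In_K : forall (K K' : list (list sym * nat)) p, Permutation K K' -> In p K' -> In p K.
Proof. intros. eapply Permutation_in; [symmetry|]; eauto. Qed.

Lemma incl_perm : forall (l l' : list nat), Permutation l l' -> incl l l'.
Proof. intros l l' H z Hz. eapply Permutation_in; eauto. Qed.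

Lemma step_plus : forall K T Q a1 a2 w v b K',
  Permutation K ((a1 ++ SV w :: a2, v) :: (b, w) :: K') ->
  Inv {| combs := K; tens := T; pars := Q |} ->
  Inv {| combs := (a1 ++ b ++ a2, v) :: K'; tens := T; pars := Q |}.
Proof.
  intros K T Q a1 a2 w v b K' HP (I1 & I3 & I2 & I4a & I4b & I5a & I5b & I5c). cbn [combs tens pars] in *.
  destruct (I1 _ (In_K _ _ _ HP (or_introl eq_refl))) as (Hv & Hsa & Oa & HOa & Hpa & HGa).
  destruct (I1 _ (In_K _ _ _ HP (or_intror (or_introl eq_refl)))) as (Hw & Hsb & Ob & HOb & Hpb & HGb).
  cbn [fst snd] in *.
  assert (Hwv : isv w = true) by (apply isv_true; auto).
  assert (HL : Permutation (Live K) (Live ((a1 ++ b ++ a2, v) :: K'))).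
  { eapply Permutation_trans; [apply Live_perm; exact HP|]. unfold Live; simpl.
    rewrite !fvars_app. change (SV w :: a2) with ([SV w] ++ a2). rewrite fvars_app, fvars_SV by auto. psolve. }
  assert (HDm : Permutation (Dm {| combs := K; tens := T; pars := Q |}) ([w] ++ Dm {| combs := (a1 ++ b ++ a2, v) :: K'; tens := T; pars := Q |})).
  { unfold Dm; cbn [combs tens pars]. eapply Permutation_trans; [apply Permutation_app_tail; apply fm_perm; exact HP|].
    simpl. rewrite opens_mid, !opens_app by auto. psolve'. }
  assert (HSp : Permutation (Sp {| combs := K; tens := T; pars := Q |}) ([w] ++ Sp {| combs := (a1 ++ b ++ a2, v) :: K'; tens := T; pars := Q |})).
  { unfold Sp; cbn [combs tens pars]. eapply Permutation_trans; [apply Permutation_app_tail; apply Permutation_map; exact HP|].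
    simpl. psolve'. }
  assert (Hnw : ~ In w (opens a1 ++ opens a2)).
  { assert (N1 : NoDup (flat_map (fun p => opens (fst p)) K)) by (eapply NoDup_app_remove_r; exact I5a).
    eapply Permutation_NoDup in N1; [|apply fm_perm; exact HP]. simpl in N1.
    apply NoDup_app_remove_r in N1. rewrite opens_mid in N1 by auto. apply NoDup_remove_2 in N1. exact N1. }
  destruct (I5_step _ _ _ _ _ I5a I5b HDm HSp) as [N5 I5'].
  split; [|split; [|split; [|split; [|split; [|split; [|split]]]]]]; cbn [combs tens pars]; auto.
  - intros p [<-|Hp]; [|eapply I1_rest; eauto; apply incl_perm; symmetry; exact HL].
    unfold CombOK; cbn [fst snd]. split; [auto|split].
    + rewrite !ssort_app in *. rewrite ssort_cons, abs_f_v in Hsa by auto. lia.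
    + exists (Oa ++ Ob). split; [intros z Hz; apply in_app_or in Hz as [?|?]; auto|split].
      * rewrite !fvars_app, flat_map_app. rewrite fvars_app in Hpa. change (SV w :: a2) with ([SV w] ++ a2) in Hpa.
        rewrite fvars_app, fvars_SV in Hpa by auto. simpl in Hpa.
        eapply Permutation_trans; [|apply Permutation_app; [exact Hpa|exact Hpb]]. psolve.
      * eapply Good_mono; [apply incl_perm; symmetry; exact HL|]. apply good_plus with (w := w); auto.
        intros z Hz. eapply Permutation_in; [symmetry; exact HL|]. unfold Live; simpl.
        apply in_or_app; left. rewrite !fvars_app. apply in_or_app; right; apply in_or_app; left.
        eapply Permutation_in; [symmetry; exact Hpb|exact Hz].
  - eapply Permutation_trans; [symmetry; exact HL|exact I3].
  - eapply Permutation_NoDup; [exact HL|exact I2].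
  - intros z Hz. apply I5c. eapply Permutation_in; [symmetry; exact HDm|]. apply in_or_app; right; auto.
Qed.


Lemma tens_info : forall k v1 v2 v, In (k, v1, v2, v) (tens X0) ->
  wrapok k (plab P v1) (plab P v2) (plab P v) /\ In v1 (pverts P) /\ In v2 (pverts P) /\ In v (pverts P).
Proof.
  intros k v1 v2 v H. unfold X0, abstract in H. simpl in H. apply in_flat_map in H as (l & Hl & H).
  destruct Hps as (_ & _ & Hlk & _). destruct (Hlk l Hl) as (Hok & _ & Hi).
  destruct l as [x y z|x y z|x y z|k' x y z|k' x y z|k' x y z|x y z|k' x y z|x y z|x y z|k' x y z|k' x y z];
  simpl in H; try contradiction; destruct H as [E|[]]; inversion E; subst;
  (split; [unfold wrapok; simpl in Hok; tauto|]); repeat split; apply Hi; simpl; tauto.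
Qed.

Lemma step_wrap : forall K T Q k v1 v2 v a1 a2 b K' T',
  Permutation T ((k, v1, v2, v) :: T') ->
  Permutation K ((a1 ++ S1 :: a2, v1) :: (b, v2) :: K') ->
  selected abs_f k a1 a2 ->
  Inv {| combs := K; tens := T; pars := Q |} ->
  Inv {| combs := (a1 ++ b ++ a2, v) :: K'; tens := T'; pars := Q |}.
Proof.
  intros K T Q k v1 v2 v a1 a2 b K' T' HT HP Hsel (I1 & I3 & I2 & I4a & I4b & I5a & I5b & I5c). cbn [combs tens pars] in *.
  destruct (I1 _ (In_K _ _ _ HP (or_introl eq_refl))) as (Hv1 & Hsa & Oa & HOa & Hpa & HGa).
  destruct (I1 _ (In_K _ _ _ HP (or_intror (or_introl eq_refl)))) as (Hv2 & Hsb & Ob & HOb & Hpb & HGb).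
  cbn [fst snd] in *.
  destruct (tens_info k v1 v2 v) as (Hwr & _ & _ & Hv).
  { apply I4a. eapply Permutation_in; [symmetry; exact HT|left; auto]. }
  assert (HL : Permutation (Live K) (Live ((a1 ++ b ++ a2, v) :: K'))).
  { eapply Permutation_trans; [apply Live_perm; exact HP|]. unfold Live; simpl.
    rewrite !fvars_app. change (S1 :: a2) with ([S1] ++ a2). rewrite fvars_app. simpl. psolve. }
  assert (HDm : Permutation (Dm {| combs := K; tens := T; pars := Q |}) ([v1; v2] ++ Dm {| combs := (a1 ++ b ++ a2, v) :: K'; tens := T'; pars := Q |})).
  { unfold Dm; cbn [combs tens pars].
    eapply Permutation_trans; [apply Permutation_app_tail; apply fm_perm; exact HP|].
    eapply Permutation_trans; [apply Permutation_app_head; apply Permutation_app_tail; apply fm_perm; exact HT|].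
    simpl. rewrite opens_S1, !opens_app by auto. psolve'. }
  assert (HSp : Permutation (Sp {| combs := K; tens := T; pars := Q |}) ([v1; v2] ++ Sp {| combs := (a1 ++ b ++ a2, v) :: K'; tens := T'; pars := Q |})).
  { unfold Sp; cbn [combs tens pars].
    eapply Permutation_trans; [apply Permutation_app_tail; apply Permutation_map; exact HP|].
    eapply Permutation_trans; [apply Permutation_app_head; apply Permutation_app_tail; apply Permutation_map; exact HT|].
    simpl. psolve'. }
  destruct (I5_step _ _ _ _ _ I5a I5b HDm HSp) as [N5 I5'].
  split; [|split; [|split; [|split; [|split; [|split; [|split]]]]]]; cbn [combs tens pars]; auto.
  - intros p [<-|Hp]; [|eapply I1_rest; eauto; apply incl_perm; symmetry; exact HL].
    unfold CombOK; cbn [fst snd]. split; [auto|split].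
    + rewrite !ssort_app in *. rewrite ssort_cons in Hsa.
      rewrite (wrapok_sort _ _ _ _ Hwr) by (auto using wf_pverts; lia). lia.
    + exists (Oa ++ Ob). split; [intros z Hz; apply in_app_or in Hz as [?|?]; auto|split].
      * rewrite !fvars_app, flat_map_app. rewrite fvars_app in Hpa. change (S1 :: a2) with ([S1] ++ a2) in Hpa.
        rewrite fvars_app in Hpa. simpl in Hpa.
        eapply Permutation_trans; [|apply Permutation_app; [exact Hpa|exact Hpb]]. psolve.
      * eapply Good_mono; [apply incl_perm; symmetry; exact HL|]. eapply good_wrap; eauto.
  - eapply Permutation_trans; [symmetry; exact HL|exact I3].
  - eapply Permutation_NoDup; [exact HL|exact I2].
  - intros z Hz. apply I4a. eapply Permutation_in; [symmetry; exact HT|right; auto].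
  - intros z Hz. apply I5c. eapply Permutation_in; [symmetry; exact HDm|]. apply in_or_app; right; auto.
Qed.


Lemma Good_perm : forall L O O' s v, Permutation O O' -> Good L O s v -> Good L O' s v.
Proof.
  intros L O O' s v HP H sg H1 H2 H3. eapply nd_perm; [|apply H; auto].
  - apply Permutation_app_tail. apply Permutation_map. exact HP.
  - eapply Permutation_NoDup; [|exact H2]. apply Permutation_app_tail. apply fm_perm. symmetry; exact HP.
Qed.

Lemma get_owner : forall O a s, incl O U -> In a U -> Permutation (fr a ++ s) (flat_map fr O) ->
  exists O', Permutation O (a :: O') /\ Permutation s (flat_map fr O') /\ incl O' U.
Proof.
  intros O a s HO Ha HP. destruct (fr_ne a Ha) as [z Hz].
  assert (HaO : In a O) by (eapply owner; eauto; eapply Permutation_in; [exact HP|apply in_or_app; auto]).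
  destruct (extract O a HaO) as [O' HO'].
  exists O'. split; [auto|split].
  - apply (Permutation_app_inv_l (fr a)). eapply Permutation_trans; [exact HP|].
    change (fr a ++ flat_map fr O') with (flat_map fr (a :: O')). apply fm_perm; auto.
  - intros x Hx. apply HO. eapply Permutation_in; [symmetry; exact HO'|right; auto].
Qed.

Lemma par_in_X0 : forall p, In p (pars X0) -> exists l, In l (plinks P) /\ In p (abs_par fr l).
Proof. intros p H. unfold X0, abstract in H. simpl in H. apply in_flat_map in H. exact H. Qed.

Lemma aux_in : forall l x, In l (plinks P) -> In x (auxs l) -> In x U.
Proof. intros l x Hl Hx. apply U_incl_aux. unfold all_auxs. apply in_flat_map. eauto. Qed.

Lemma link_info : forall l, In l (plinks P) -> link_ok (plab P) l /\ incl (prems l ++ concls l) (pverts P).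
Proof. intros l Hl. destruct Hps as (_ & _ & Hlk & _). destruct (Hlk l Hl) as (? & _ & ?). auto. Qed.

Ltac par_inv H :=
  let l := fresh "l" in let Hl := fresh "Hl" in let Hp := fresh "Hp" in
  let Hok := fresh "Hok" in let Hi := fresh "Hi" in let E := fresh "E" in
  destruct (par_in_X0 _ H) as (l & Hl & Hp); destruct (link_info l Hl) as (Hok & Hi);
  destruct l; simpl in Hp; try contradiction; destruct Hp as [E|[]]; inversion E; subst; clear E; simpl in Hok.

Lemma par_info_under : forall c eA v, In (ParRUnder c eA v) (pars X0) ->
  exists a, eA = fr a /\ In a U /\ plab P v = Under (plab P a) (plab P c) /\ In v (pverts P).
Proof.
  intros c eA v H. par_inv H. eexists. split; [reflexivity|split; [|split; [exact Hok|]]].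
  - eapply aux_in; [eauto|simpl; auto].
  - apply Hi; simpl; tauto.
Qed.
Lemma par_info_over : forall c v eB, In (ParROver c v eB) (pars X0) ->
  exists b, eB = fr b /\ In b U /\ plab P v = Over (plab P c) (plab P b) /\ In v (pverts P).
Proof.
  intros c v eB H. par_inv H. eexists. split; [reflexivity|split; [|split; [exact Hok|]]].
  - eapply aux_in; [eauto|simpl; auto].
  - apply Hi; simpl; tauto.
Qed.
Lemma par_info_ext : forall k c v eB, In (ParRExt k c v eB) (pars X0) ->
  exists b, eB = fr b /\ In b U /\ plab P v = Ext k (plab P c) (plab P b) /\ In v (pverts P).
Proof.
  intros k c v eB H. par_inv H. eexists. split; [reflexivity|split; [|split; [exact Hok|]]].
  - eapply aux_in; [eauto|simpl; auto].
  - apply Hi; simpl; tauto.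
Qed.
Lemma par_info_inf : forall k c eA v, In (ParRInf k c eA v) (pars X0) ->
  exists a, eA = fr a /\ In a U /\ plab P v = Inf k (plab P a) (plab P c) /\ In v (pverts P).
Proof.
  intros k c eA v H. par_inv H. eexists. split; [reflexivity|split; [|split; [exact Hok|]]].
  - eapply aux_in; [eauto|simpl; auto].
  - apply Hi; simpl; tauto.
Qed.
Lemma par_info_prod : forall v1 eA eB, In (ParLProd v1 eA eB) (pars X0) ->
  exists a b, eA = fr a /\ eB = fr b /\ In a U /\ In b U /\ plab P v1 = Prod (plab P a) (plab P b) /\ In v1 (pverts P).
Proof.
  intros v1 eA eB H. par_inv H. do 2 eexists. split; [reflexivity|split; [reflexivity|split; [|split; [|split; [exact Hok|]]]]].
  - eapply aux_in; [eauto|simpl; auto].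
  - eapply aux_in; [eauto|simpl; auto].
  - apply Hi; simpl; tauto.
Qed.
Lemma par_info_wrap : forall k v1 eA eB, In (ParLWrap k v1 eA eB) (pars X0) ->
  exists a b, eA = fr a /\ eB = fr b /\ In a U /\ In b U /\ plab P v1 = Wrap k (plab P a) (plab P b) /\ In v1 (pverts P).
Proof.
  intros k v1 eA eB H. par_inv H. do 2 eexists. split; [reflexivity|split; [reflexivity|split; [|split; [|split; [exact Hok|]]]]].
  - eapply aux_in; [eauto|simpl; auto].
  - eapply aux_in; [eauto|simpl; auto].
  - apply Hi; simpl; tauto.
Qed.


Lemma par_I3 : forall K K2 d Q Q' p, Permutation (Live K) (d ++ Live K2) ->
  Permutation (Live K) (flat_map fr hs ++ flat_map parvars Q) -> Permutation Q (p :: Q') -> parvars p = d ->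
  Permutation (Live K2) (flat_map fr hs ++ flat_map parvars Q').
Proof.
  intros K K2 d Q Q' p H1 H2 H3 H4. apply (Permutation_app_inv_l d).
  eapply Permutation_trans; [symmetry; exact H1|]. eapply Permutation_trans; [exact H2|].
  eapply Permutation_trans; [apply Permutation_app_head; apply fm_perm; exact H3|]. simpl. rewrite H4. psolve.
Qed.

Lemma par_L : forall K K2 d, Permutation (Live K) (d ++ Live K2) -> NoDup (Live K) ->
  incl (Live K2) (Live K) /\ (forall z, In z (Live K2) -> ~ In z d) /\ NoDup (Live K2).
Proof.
  intros K K2 d H1 H2. assert (N : NoDup (d ++ Live K2)) by (eapply Permutation_NoDup; eauto).
  split; [|split].
  - intros z Hz. eapply Permutation_in; [symmetry; exact H1|apply in_or_app; auto].
  - intros z Hz Hd. exact (nodup_disj _ _ N z Hd Hz).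
  - eapply NoDup_app_remove_l; eauto.
Qed.

Lemma Live_cons : forall s v K, Live ((s, v) :: K) = fvars s ++ Live K.
Proof. reflexivity. Qed.

Lemma step_under : forall K T Q c eA v b K' Q',
  Permutation Q (ParRUnder c eA v :: Q') ->
  Permutation K ((spine eA ++ b, c) :: K') ->
  Inv {| combs := K; tens := T; pars := Q |} ->
  Inv {| combs := (b, v) :: K'; tens := T; pars := Q' |}.
Proof.
  intros K T Q c eA v b K' Q' HQ HP (I1 & I3 & I2 & I4a & I4b & I5a & I5b & I5c). cbn [combs tens pars] in *.
  destruct (par_info_under c eA v) as (a & -> & Ha & Hlab & Hv).
  { apply I4b; eapply Permutation_in; [symmetry; exact HQ|left; auto]. }
  destruct (I1 _ (In_K _ _ _ HP (or_introl eq_refl))) as (Hc & Hs & O & HO & Hp & HG). cbn [fst snd] in *.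
  assert (Hfr := fr_fresh a Ha).
  rewrite fvars_app, spine_fvars in Hp by auto.
  destruct (get_owner O a (fvars b) HO Ha Hp) as (O' & HO' & Hp' & HOU).
  assert (HL : Permutation (Live K) (fr a ++ Live ((b, v) :: K'))).
  { eapply Permutation_trans; [apply Live_perm; exact HP|]. rewrite !Live_cons, fvars_app, spine_fvars by auto. psolve. }
  destruct (par_L _ _ _ HL I2) as (HLi & HLd & HLn).
  assert (HDm : Permutation (Dm {| combs := K; tens := T; pars := Q |}) ([c] ++ Dm {| combs := (b, v) :: K'; tens := T; pars := Q' |})).
  { unfold Dm; cbn [combs tens pars].
    eapply Permutation_trans; [apply Permutation_app_tail; apply fm_perm; exact HP|].
    eapply Permutation_trans; [apply Permutation_app_head; apply Permutation_app_head; apply Permutation_map; exact HQ|].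
    simpl. rewrite opens_app, spine_opens by auto. psolve'. }
  assert (HSp : Permutation (Sp {| combs := K; tens := T; pars := Q |}) ([c] ++ Sp {| combs := (b, v) :: K'; tens := T; pars := Q' |})).
  { unfold Sp; cbn [combs tens pars].
    eapply Permutation_trans; [apply Permutation_app_tail; apply Permutation_map; exact HP|].
    eapply Permutation_trans; [apply Permutation_app_head; apply Permutation_app_head; apply fm_perm; exact HQ|].
    simpl. psolve'. }
  destruct (I5_step _ _ _ _ _ I5a I5b HDm HSp) as [N5 I5'].
  split; [|split; [|split; [|split; [|split; [|split; [|split]]]]]]; cbn [combs tens pars]; auto.
  - intros p [<-|Hp0]; [|eapply I1_rest1; eauto].
    unfold CombOK; cbn [fst snd]. split; [auto|split].
    + rewrite ssort_app, ssort_spine, fr_len in Hs by (auto; intros z Hz; apply abs_f_fresh, isv_false, Hfr; auto).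
      rewrite Hlab. simpl. lia.
    + exists O'. split; [auto|split; [auto|]].
      eapply good_under with (L := Live K); eauto using fr_nodup, fr_len, fr_FU.
      * eapply Good_perm; eauto.
      * intros z Hz Hz'. apply (HLd z); auto. rewrite Live_cons. apply in_or_app; left.
        eapply Permutation_in; [symmetry; exact Hp'|exact Hz'].
  - eapply par_I3; eauto; reflexivity.
  - intros z Hz. apply I4b. eapply Permutation_in; [symmetry; exact HQ|right; auto].
  - intros z Hz. apply I5c. eapply Permutation_in; [symmetry; exact HDm|]. apply in_or_app; right; auto.
Qed.


Lemma step_Rgen : forall K T Q p c a v s s2 K' Q',
  Permutation Q (p :: Q') -> Permutation K ((s, c) :: K') ->
  In p (pars X0) -> parvars p = fr a -> In a U -> parprem p = c -> parmain p = [v] -> In v (pverts P) ->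
  Permutation (fvars s) (fr a ++ fvars s2) -> opens s2 = opens s ->
  (ssort abs_f s = sort (plab P c) -> ssort abs_f s2 = sort (plab P v)) ->
  (forall L L' O, Good L (a :: O) s c -> incl L' L -> (forall z, In z L' -> ~ In z (fr a)) ->
     Permutation (fvars s2) (flat_map fr O) -> disj (fr a) (flat_map fr O) -> Good L' O s2 v) ->
  Inv {| combs := K; tens := T; pars := Q |} ->
  Inv {| combs := (s2, v) :: K'; tens := T; pars := Q' |}.
Proof.
  intros K T Q p c a v s s2 K' Q' HQ HP Hp0 Hpv Ha Hpp Hpm Hv Hfs Hos Hss HGood
    (I1 & I3 & I2 & I4a & I4b & I5a & I5b & I5c). cbn [combs tens pars] in *.
  destruct (I1 _ (In_K _ _ _ HP (or_introl eq_refl))) as (Hc & Hs & O & HO & Hp & HG). cbn [fst snd] in *.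
  assert (Hp2 : Permutation (fr a ++ fvars s2) (flat_map fr O)) by (eapply Permutation_trans; [symmetry; exact Hfs|exact Hp]).
  destruct (get_owner O a (fvars s2) HO Ha Hp2) as (O' & HO' & Hp' & HOU).
  assert (HL : Permutation (Live K) (fr a ++ Live ((s2, v) :: K'))).
  { eapply Permutation_trans; [apply Live_perm; exact HP|]. rewrite !Live_cons.
    eapply Permutation_trans; [apply Permutation_app_tail; exact Hfs|]. psolve. }
  destruct (par_L _ _ _ HL I2) as (HLi & HLd & HLn).
  assert (HDm : Permutation (Dm {| combs := K; tens := T; pars := Q |}) ([c] ++ Dm {| combs := (s2, v) :: K'; tens := T; pars := Q' |})).
  { unfold Dm; cbn [combs tens pars].
    eapply Permutation_trans; [apply Permutation_app_tail; apply fm_perm; exact HP|].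
    eapply Permutation_trans; [apply Permutation_app_head; apply Permutation_app_head; apply Permutation_map; exact HQ|].
    simpl. rewrite Hos, Hpp. psolve'. }
  assert (HSp : Permutation (Sp {| combs := K; tens := T; pars := Q |}) ([c] ++ Sp {| combs := (s2, v) :: K'; tens := T; pars := Q' |})).
  { unfold Sp; cbn [combs tens pars].
    eapply Permutation_trans; [apply Permutation_app_tail; apply Permutation_map; exact HP|].
    eapply Permutation_trans; [apply Permutation_app_head; apply Permutation_app_head; apply fm_perm; exact HQ|].
    simpl. rewrite Hpm. psolve'. }
  destruct (I5_step _ _ _ _ _ I5a I5b HDm HSp) as [N5 I5'].
  split; [|split; [|split; [|split; [|split; [|split; [|split]]]]]]; cbn [combs tens pars]; auto.
  - intros q [<-|Hq]; [|eapply I1_rest1; eauto].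
    unfold CombOK; cbn [fst snd]. split; [auto|split; [auto|]].
    exists O'. split; [auto|split; [auto|]].
    eapply HGood with (L := Live K); eauto.
    + eapply Good_perm; eauto.
    + intros z Hz Hz'. apply (HLd z); auto. rewrite Live_cons. apply in_or_app; left.
      eapply Permutation_in; [symmetry; exact Hp'|exact Hz'].
  - eapply par_I3; eauto.
  - intros z Hz. apply I4b. eapply Permutation_in; [symmetry; exact HQ|right; auto].
  - intros z Hz. apply I5c. eapply Permutation_in; [symmetry; exact HDm|]. apply in_or_app; right; auto.
Qed.

Lemma ssort_fr : forall a, In a U -> ssort abs_f (spine (fr a)) = sort (plab P a).
Proof.
  intros a Ha. rewrite ssort_spine, fr_len by (auto; intros z Hz; apply abs_f_fresh, isv_false, (fr_fresh a Ha); auto). lia.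
Qed.

Lemma step_over : forall K T Q c eB v b K' Q',
  Permutation Q (ParROver c v eB :: Q') ->
  Permutation K ((b ++ spine eB, c) :: K') ->
  Inv {| combs := K; tens := T; pars := Q |} ->
  Inv {| combs := (b, v) :: K'; tens := T; pars := Q' |}.
Proof.
  intros K T Q c eB v b K' Q' HQ HP HI.
  assert (Hp0 : In (ParROver c v eB) (pars X0)) by (apply (proj1 (proj2 (proj2 (proj2 (proj2 HI))))); eapply Permutation_in; [symmetry; exact HQ|left; auto]).
  destruct (par_info_over c v eB Hp0) as (a & -> & Ha & Hlab & Hv).
  assert (Hfr := fr_fresh a Ha).
  eapply step_Rgen with (a := a); eauto.
  - rewrite fvars_app, spine_fvars by auto. apply Permutation_app_comm.
  - rewrite opens_app, spine_opens, app_nil_r by auto. reflexivity.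
  - rewrite ssort_app, ssort_fr, Hlab by auto. simpl. lia.
  - intros L L' O HG HL' HLd Hp Hd. eapply good_over; eauto using fr_nodup, fr_len, fr_FU.
Qed.

Lemma step_under' : forall K T Q c eA v b K' Q',
  Permutation Q (ParRUnder c eA v :: Q') ->
  Permutation K ((spine eA ++ b, c) :: K') ->
  Inv {| combs := K; tens := T; pars := Q |} ->
  Inv {| combs := (b, v) :: K'; tens := T; pars := Q' |}.
Proof.
  intros K T Q c eA v b K' Q' HQ HP HI.
  assert (Hp0 : In (ParRUnder c eA v) (pars X0)) by (apply (proj1 (proj2 (proj2 (proj2 (proj2 HI))))); eapply Permutation_in; [symmetry; exact HQ|left; auto]).
  destruct (par_info_under c eA v Hp0) as (a & -> & Ha & Hlab & Hv).
  assert (Hfr := fr_fresh a Ha).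
  eapply step_Rgen with (a := a); eauto.
  - rewrite fvars_app, spine_fvars by auto. reflexivity.
  - rewrite opens_app, spine_opens by auto. reflexivity.
  - rewrite ssort_app, ssort_fr, Hlab by auto. simpl. lia.
  - intros L L' O HG HL' HLd Hp Hd. eapply good_under; eauto using fr_nodup, fr_len, fr_FU.
Qed.

Lemma step_ext : forall K T Q k c eB v a1 a2 K' Q',
  Permutation Q (ParRExt k c v eB :: Q') ->
  Permutation K ((a1 ++ spine eB ++ a2, c) :: K') ->
  selected abs_f k a1 a2 ->
  Inv {| combs := K; tens := T; pars := Q |} ->
  Inv {| combs := (a1 ++ S1 :: a2, v) :: K'; tens := T; pars := Q' |}.
Proof.
  intros K T Q k c eB v a1 a2 K' Q' HQ HP Hsel HI.
  assert (Hp0 : In (ParRExt k c v eB) (pars X0)) by (apply (proj1 (proj2 (proj2 (proj2 (proj2 HI))))); eapply Permutation_in; [symmetry; exact HQ|left; auto]).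
  destruct (par_info_ext k c v eB Hp0) as (a & -> & Ha & Hlab & Hv).
  assert (Hfr := fr_fresh a Ha).
  eapply step_Rgen with (a := a); eauto.
  - rewrite !fvars_app, spine_fvars by auto. change (S1 :: a2) with ([S1] ++ a2). rewrite fvars_app. simpl. psolve.
  - rewrite opens_S1, !opens_app, spine_opens by auto. reflexivity.
  - rewrite !ssort_app, ssort_fr, Hlab by auto. rewrite ssort_cons. simpl. lia.
  - intros L L' O HG HL' HLd Hp Hd. eapply good_ext; eauto using fr_nodup, fr_len, fr_FU.
Qed.

Lemma step_inf : forall K T Q k c eA v e1 e2 b K' Q',
  Permutation Q (ParRInf k c eA v :: Q') ->
  spine eA = e1 ++ S1 :: e2 -> selected abs_f k e1 e2 ->
  Permutation K ((e1 ++ b ++ e2, c) :: K') ->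
  Inv {| combs := K; tens := T; pars := Q |} ->
  Inv {| combs := (b, v) :: K'; tens := T; pars := Q' |}.
Proof.
  intros K T Q k c eA v e1 e2 b K' Q' HQ He Hsel HP HI.
  assert (Hp0 : In (ParRInf k c eA v) (pars X0)) by (apply (proj1 (proj2 (proj2 (proj2 (proj2 HI))))); eapply Permutation_in; [symmetry; exact HQ|left; auto]).
  destruct (par_info_inf k c eA v Hp0) as (a & -> & Ha & Hlab & Hv).
  assert (Hfr := fr_fresh a Ha).
  destruct (spine_split_opens a e1 e2 Hfr He) as [E1 E2].
  assert (Hf12 : fvars e1 ++ fvars e2 = fr a).
  { rewrite <- (spine_fvars (fr a)), He, fvars_app by auto. reflexivity. }
  assert (Hs12 : ssort abs_f e1 + 1 + ssort abs_f e2 = sort (plab P a)).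
  { rewrite <- ssort_fr, He, ssort_app, ssort_cons by auto. lia. }
  eapply step_Rgen with (a := a); eauto.
  - rewrite !fvars_app, <- Hf12. psolve.
  - rewrite !opens_app, E1, E2, app_nil_r. reflexivity.
  - rewrite !ssort_app, Hlab. simpl. lia.
  - intros L L' O HG HL' HLd Hp Hd. eapply good_inf; eauto using fr_nodup, fr_len, fr_FU.
Qed.


Lemma step_Lgen : forall K T Q p v1 a b v2 s s2 K' Q',
  Permutation Q (p :: Q') -> Permutation K ((s, v2) :: K') ->
  In p (pars X0) -> parvars p = fr a ++ fr b -> In a U -> In b U -> parprem p = v1 -> parmain p = [] ->
  Permutation (fvars s) (fr a ++ fr b ++ fvars s2) -> Permutation (opens s2) (v1 :: opens s) ->
  (ssort abs_f s = sort (plab P v2) -> ssort abs_f s2 = sort (plab P v2)) ->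
  (forall L L' O, Good L (a :: b :: O) s v2 -> incl L' L -> (forall z, In z L' -> ~ In z (fr a ++ fr b)) ->
     NoDup (fr a ++ fr b) ->
     Permutation (fvars s2) (flat_map fr O) -> disj (fr a ++ fr b) (flat_map fr O) -> Good L' O s2 v2) ->
  Inv {| combs := K; tens := T; pars := Q |} ->
  Inv {| combs := (s2, v2) :: K'; tens := T; pars := Q' |}.
Proof.
  intros K T Q p v1 a b v2 s s2 K' Q' HQ HP Hp0 Hpv Ha Hb Hpp Hpm Hfs Hos Hss HGood
    (I1 & I3 & I2 & I4a & I4b & I5a & I5b & I5c). cbn [combs tens pars] in *.
  destruct (I1 _ (In_K _ _ _ HP (or_introl eq_refl))) as (Hc & Hs & O & HO & Hp & HG). cbn [fst snd] in *.
  assert (Hp2 : Permutation (fr a ++ (fr b ++ fvars s2)) (flat_map fr O)) by (eapply Permutation_trans; [symmetry; exact Hfs|exact Hp]).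
  destruct (get_owner O a _ HO Ha Hp2) as (O1 & HO1 & Hp1 & HOU1).
  destruct (get_owner O1 b _ HOU1 Hb Hp1) as (O2 & HO2 & Hp' & HOU2).
  assert (HL : Permutation (Live K) ((fr a ++ fr b) ++ Live ((s2, v2) :: K'))).
  { eapply Permutation_trans; [apply Live_perm; exact HP|]. rewrite !Live_cons.
    eapply Permutation_trans; [apply Permutation_app_tail; exact Hfs|]. psolve. }
  destruct (par_L _ _ _ HL I2) as (HLi & HLd & HLn).
  assert (Nab : NoDup (fr a ++ fr b)) by (eapply NoDup_app_remove_r; eapply Permutation_NoDup; [exact HL|exact I2]).
  assert (HDm : Permutation (Dm {| combs := K; tens := T; pars := Q |}) ([] ++ Dm {| combs := (s2, v2) :: K'; tens := T; pars := Q' |})).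
  { unfold Dm; cbn [combs tens pars].
    eapply Permutation_trans; [apply Permutation_app_tail; apply fm_perm; exact HP|].
    eapply Permutation_trans; [apply Permutation_app_head; apply Permutation_app_head; apply Permutation_map; exact HQ|].
    simpl. pnorm. eapply Permutation_trans; [|apply Permutation_app_tail; symmetry; exact Hos]. rewrite Hpp. psolve'. }
  assert (HSp : Permutation (Sp {| combs := K; tens := T; pars := Q |}) ([] ++ Sp {| combs := (s2, v2) :: K'; tens := T; pars := Q' |})).
  { unfold Sp; cbn [combs tens pars].
    eapply Permutation_trans; [apply Permutation_app_tail; apply Permutation_map; exact HP|].
    eapply Permutation_trans; [apply Permutation_app_head; apply Permutation_app_head; apply fm_perm; exact HQ|].
    simpl. rewrite Hpm. psolve'. }
  destruct (I5_step _ _ _ _ _ I5a I5b HDm HSp) as [N5 I5'].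
  split; [|split; [|split; [|split; [|split; [|split; [|split]]]]]]; cbn [combs tens pars]; auto.
  - intros q [<-|Hq]; [|eapply I1_rest1; eauto].
    unfold CombOK; cbn [fst snd]. split; [auto|split; [auto|]].
    exists O2. split; [auto|split; [auto|]].
    eapply HGood with (L := Live K); eauto.
    + eapply Good_perm; [|exact HG]. eapply Permutation_trans; [exact HO1|]. apply perm_skip. exact HO2.
    + intros z Hz Hz'. apply (HLd z); auto. rewrite Live_cons. apply in_or_app; left.
      eapply Permutation_in; [symmetry; exact Hp'|exact Hz'].
  - eapply par_I3; eauto.
  - intros z Hz. apply I4b. eapply Permutation_in; [symmetry; exact HQ|right; auto].
  - intros z Hz. apply I5c. eapply Permutation_in; [symmetry; exact HDm|]. exact Hz.
Qed.

Lemma step_prod : forall K T Q v1 eA eB g1 g2 v2 K' Q',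
  Permutation Q (ParLProd v1 eA eB :: Q') ->
  Permutation K ((g1 ++ spine eA ++ spine eB ++ g2, v2) :: K') ->
  Inv {| combs := K; tens := T; pars := Q |} ->
  Inv {| combs := (g1 ++ SV v1 :: g2, v2) :: K'; tens := T; pars := Q' |}.
Proof.
  intros K T Q v1 eA eB g1 g2 v2 K' Q' HQ HP HI.
  assert (Hp0 : In (ParLProd v1 eA eB) (pars X0)) by (apply (proj1 (proj2 (proj2 (proj2 (proj2 HI))))); eapply Permutation_in; [symmetry; exact HQ|left; auto]).
  destruct (par_info_prod v1 eA eB Hp0) as (a & b & -> & -> & Ha & Hb & Hlab & Hv).
  assert (Hfa' := fr_fresh a Ha). assert (Hfb := fr_fresh b Hb).
  assert (Hv1 : isv v1 = true) by (apply isv_true; auto).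
  eapply step_Lgen with (a := a) (b := b); eauto.
  - rewrite !fvars_app, !spine_fvars by auto. change (SV v1 :: g2) with ([SV v1] ++ g2). rewrite fvars_app, fvars_SV by auto. psolve.
  - rewrite opens_mid by auto. rewrite !opens_app, !spine_opens by auto. simpl. symmetry. apply Permutation_middle.
  - rewrite !ssort_app, !ssort_fr by auto. change (SV v1 :: g2) with ([SV v1] ++ g2). rewrite ssort_app.
    simpl. rewrite abs_f_v, Hlab by auto. simpl. lia.
  - intros L L' O HG HL' HLd Nab Hp Hd. eapply good_prod; eauto using fr_nodup, fr_len, fr_FU.
    + intros z Hz. apply in_app_or in Hz as [Hz|Hz]; [eapply fr_FU; [exact Ha|]|eapply fr_FU; [exact Hb|]]; auto.
    + rewrite fvars_app in Hp. change (SV v1 :: g2) with ([SV v1] ++ g2) in Hp. rewrite fvars_app, fvars_SV in Hp by auto. exact Hp.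
Qed.

Lemma step_wrappar : forall K T Q k v1 eA eB e1 e2 g1 g2 v2 K' Q',
  Permutation Q (ParLWrap k v1 eA eB :: Q') ->
  spine eA = e1 ++ S1 :: e2 -> selected abs_f k e1 e2 ->
  Permutation K ((g1 ++ e1 ++ spine eB ++ e2 ++ g2, v2) :: K') ->
  Inv {| combs := K; tens := T; pars := Q |} ->
  Inv {| combs := (g1 ++ SV v1 :: g2, v2) :: K'; tens := T; pars := Q' |}.
Proof.
  intros K T Q k v1 eA eB e1 e2 g1 g2 v2 K' Q' HQ He Hsel HP HI.
  assert (Hp0 : In (ParLWrap k v1 eA eB) (pars X0)) by (apply (proj1 (proj2 (proj2 (proj2 (proj2 HI))))); eapply Permutation_in; [symmetry; exact HQ|left; auto]).
  destruct (par_info_wrap k v1 eA eB Hp0) as (a & b & -> & -> & Ha & Hb & Hlab & Hv).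
  assert (Hfa' := fr_fresh a Ha). assert (Hfb := fr_fresh b Hb).
  assert (Hv1 : isv v1 = true) by (apply isv_true; auto).
  destruct (spine_split_opens a e1 e2 Hfa' He) as [E1 E2].
  assert (Hf12 : fvars e1 ++ fvars e2 = fr a).
  { rewrite <- (spine_fvars (fr a)), He, fvars_app by auto. reflexivity. }
  assert (Hs12 : ssort abs_f e1 + 1 + ssort abs_f e2 = sort (plab P a)).
  { rewrite <- ssort_fr, He, ssort_app, ssort_cons by auto. lia. }
  assert (Hwf := wf_pverts v1 Hv). rewrite Hlab in Hwf. simpl in Hwf.
  eapply step_Lgen with (a := a) (b := b); eauto.
  - rewrite !fvars_app, !spine_fvars, <- Hf12 by auto. change (SV v1 :: g2) with ([SV v1] ++ g2). rewrite fvars_app, fvars_SV by auto. psolve.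
  - rewrite opens_mid by auto. rewrite !opens_app, !spine_opens, E1, E2 by auto. simpl. symmetry. apply Permutation_middle.
  - rewrite !ssort_app, !ssort_fr by auto. change (SV v1 :: g2) with ([SV v1] ++ g2). rewrite ssort_app.
    simpl. rewrite abs_f_v, Hlab by auto. simpl. lia.
  - intros L L' O HG HL' HLd Nab Hp Hd. eapply good_wrappar; eauto using fr_nodup, fr_len, fr_FU.
    + intros z Hz. apply in_app_or in Hz as [Hz|Hz]; [eapply fr_FU; [exact Ha|]|eapply fr_FU; [exact Hb|]]; auto.
    + rewrite fvars_app in Hp. change (SV v1 :: g2) with ([SV v1] ++ g2) in Hp. rewrite fvars_app, fvars_SV in Hp by auto. exact Hp.
Qed.

Lemma step : forall X Y, contr abs_f X Y -> Inv X -> Inv Y.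
Proof.
  intros X Y H. destruct H.
  - eapply step_plus; eauto.
  - eapply step_wrap; eauto.
  - eapply step_under'; eauto.
  - eapply step_over; eauto.
  - eapply step_ext; eauto.
  - eapply step_inf; eauto.
  - eapply step_prod; eauto.
  - eapply step_wrappar; eauto.
Qed.

Lemma steps : forall X Y, clos_refl_trans _ (contr abs_f) X Y -> Inv X -> Inv Y.
Proof. intros X Y H. induction H; auto. apply step; auto. Qed.

End S.

Theorem lemma2 (P : pstruct) (hs : list nat) (c : nat) (fr : nat -> list nat)
    (gamma : str) :
  proof_structure P ->
  (* hs enumerates the hypotheses A_1, ..., A_n of P *)
  NoDup hs -> (forall v, In v hs <-> is_hyp P v) ->
  (* c is the unique conclusion C of P *)
  is_concl P c -> (forall v, is_concl P v -> v = c) ->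
  (* fresh vertices of the abstract proof structure; alpha_i = spine (fr h_i) *)
  fresh_assignment P hs fr ->
  (* a finite sequence of contractions reaches a single comb gamma |- c *)
  clos_refl_trans _ (contr (abs_sort P)) (abstract P hs fr)
    {| combs := [(gamma, c)]; tens := []; pars := [] |} ->
  nd (map (fun h => (spine (fr h), plab P h)) hs) gamma (plab P c).
Proof.
  intros Hps Hnd Hhs Hc _ Hfa Hcrt.
  apply (Inv_final P fr (flat_map fr (U P hs)) hs Hfa); auto.
  apply (steps P fr (flat_map fr (U P hs)) hs eq_refl Hfa Hps (abstract P hs fr)); [exact Hcrt|].
  apply Inv_X0; auto.
Qed.
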